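(* Let $\varphi:\mathbb{R}\times[0,\infty)\to(0,\infty)$ be a $C^2$ function such that $$\inf_{(y,z)\in\mathbb{R}\times[0,\infty)}\frac{\partial\varphi}{\partial z}(y,z)\ge0,\qquad \sup_{(y,z)\in\mathbb{R}\times[0,\infty)}\frac{\partial\varphi}{\partial z}(y,z)<\infty,\qquad \frac{\partial\varphi}{\partial z}(0,1)<1,\qquad \varphi(0,1)=1,$$ and such that the equation $\alpha=\varphi\bigl(0,1/\varphi(0,1/\alpha)\bigr)$, $\alpha>0$, has the unique solution $\alpha=1$. Then there exists a unique solution $g$ of the differential equation $$g'(y)=\varphi\left(y,\frac{y}{g(y)}\right),\qquad g(0)=0.$$ The solution $g$ is $C^2$, satisfies, as $y\to0$, $$g(y)=g'(0)y+g''(0)\tfrac{y^2}{2}+O(y^3),\quad g'(y)=g'(0)+g''(0)y+O(y^2),\quad g''(y)=g''(0)+O(y),$$ and satisfies $g(y)/y>0$ for all $y\neq0$. *)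

(* Defs.v *)
From Stdlib Require Import Reals.
From Coquelicot Require Import Coquelicot.
Open Scope R_scope.

Definition pd_y (f : R -> R -> R) (y z : R) : R := Derive (fun t => f t z) y.
Definition pd_z (f : R -> R -> R) (y z : R) : R := Derive (fun t => f y t) z.

Definition has_partials (f : R -> R -> R) : Prop :=
  forall y z, ex_derive (fun t => f t z) y /\ ex_derive (fun t => f y t) z.

Definition C2_2d (f : R -> R -> R) : Prop :=
  has_partials f /\ has_partials (pd_y f) /\ has_partials (pd_z f) /\
  forall y z,
    continuity_2d_pt f y z /\
    continuity_2d_pt (pd_y f) y z /\ continuity_2d_pt (pd_z f) y z /\
    continuity_2d_pt (pd_y (pd_y f)) y z /\ continuity_2d_pt (pd_z (pd_y f)) y z /\
    continuity_2d_pt (pd_y (pd_z f)) y z /\ continuity_2d_pt (pd_z (pd_z f)) y z.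

Definition C2_1d (g : R -> R) : Prop :=
  forall y, ex_derive g y /\ ex_derive (Derive g) y /\
            continuous (Derive_n g 2) y.

(* Solution of  g'(y) = phi(y, y/g(y)),  g(0) = 0.
   For y <> 0 the argument y/g(y) must lie in the domain [0,oo) of phi
   (in particular g(y) <> 0).  At y = 0 the quotient y/g(y) is read as its
   limit 1/g'(0), so the equation at 0 is  g'(0) = phi(0, 1/g'(0)). *)
Definition is_solution (phi : R -> R -> R) (g : R -> R) : Prop :=
  (forall y, ex_derive g y) /\
  g 0 = 0 /\
  (forall y, y <> 0 ->
     g y <> 0 /\ 0 <= y / g y /\ Derive g y = phi y (y / g y)) /\
  Derive g 0 <> 0 /\ Derive g 0 = phi 0 (/ Derive g 0).

Definition bigO0 (f : R -> R) (k : nat) : Prop :=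
  exists C delta, 0 < delta /\
    forall y, Rabs y < delta -> Rabs (f y) <= C * Rabs y ^ k.

(* Main.v *)
Require Import Defs.
From Stdlib Require Import Reals Lra Lia Psatz FunctionalExtensionality ClassicalEpsilon.
From Coquelicot Require Import Coquelicot.
Open Scope R_scope.

Lemma ball_R (x e y : R) : ball x e y <-> Rabs (y - x) < e.
Proof. unfold ball; simpl; unfold AbsRing_ball, abs, minus, plus, opp; simpl. tauto. Qed.

Lemma cont_ed (f : R -> R) x : continuous f x ->
  forall eps : posreal, exists d : posreal, forall y, Rabs (y - x) < d -> Rabs (f y - f x) < eps.
Proof.
  intros H eps. apply continuity_pt_filterlim in H.
  destruct (proj1 (continuity_pt_locally f x) H eps) as [d Hd]. exists d. intros y Hy. apply Hd. apply ball_R. exact Hy.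
Qed.

Lemma ed_cont (f : R -> R) x :
  (forall eps : posreal, exists d : posreal, forall y, Rabs (y - x) < d -> Rabs (f y - f x) < eps) ->
  continuous f x.
Proof.
  intros H. apply continuity_pt_filterlim. apply (proj2 (continuity_pt_locally f x)). intros eps.
  destruct (H eps) as [d Hd]. exists d. intros y Hy. apply Hd. apply ball_R. exact Hy.
Qed.

Lemma cont2_comp (f : R -> R -> R) (a b : R -> R) (x : R) :
  continuity_2d_pt f (a x) (b x) -> continuous a x -> continuous b x ->
  continuous (fun t => f (a t) (b t)) x.
Proof.
  intros Hf Ha Hb. apply ed_cont. intros eps.
  destruct (Hf eps) as [d Hd].
  destruct (cont_ed _ _ Ha d) as [d1 H1].
  destruct (cont_ed _ _ Hb d) as [d2 H2].
  assert (Hm : 0 < Rmin d1 d2) by (apply Rmin_pos; apply cond_pos).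
  exists (mkposreal _ Hm). simpl. intros y Hy.
  apply Hd.
  - apply H1. eapply Rlt_le_trans; [exact Hy| apply Rmin_l].
  - apply H2. eapply Rlt_le_trans; [exact Hy| apply Rmin_r].
Qed.

Lemma locally_neq0 (y : R) : y <> 0 -> locally y (fun z => z <> 0).
Proof.
  intros Hy. assert (H : 0 < Rabs y) by (apply Rabs_pos_lt; exact Hy).
  exists (mkposreal _ H). intros z Hz. pose proof (proj1 (ball_R _ _ _) Hz) as Hz'. simpl in Hz'.
  intros ->. replace (0 - y) with (- y) in Hz' by ring. rewrite Rabs_Ropp in Hz'. lra.
Qed.

Lemma cont_mul_lin (y : R) s : continuous (fun s => s * y) s.
Proof. apply (continuous_mult (fun s => s) (fun _ => y)); [apply continuous_id | apply continuous_const]. Qed.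

Lemma RInt_Rmult (f : R -> R) a b c : ex_RInt f a b -> RInt (fun x => c * f x) a b = c * RInt f a b.
Proof. intros H. exact (RInt_scal (V := R_CompleteNormedModule) f a b c H). Qed.

Lemma RInt_Rminus (f g : R -> R) a b : ex_RInt f a b -> ex_RInt g a b ->
  RInt (fun x => f x - g x) a b = RInt f a b - RInt g a b.
Proof. intros H1 H2. exact (RInt_minus (V := R_CompleteNormedModule) f g a b H1 H2). Qed.

Lemma RInt_Rconst a b c : RInt (fun _ => c) a b = (b - a) * c.
Proof. exact (RInt_const (V := R_CompleteNormedModule) a b c). Qed.

Lemma derive_cont (f : R -> R) x l : is_derive f x l -> continuous f x.
Proof. intros H. apply (ex_derive_continuous (K := R_AbsRing) (V := R_NormedModule)). exists l. exact H. Qed.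

Definition avg (f : R -> R) (y : R) : R := RInt (fun s => f (s * y)) 0 1.

Lemma avg_ex (f : R -> R) y : (forall t, continuous f t) -> ex_RInt (fun s => f (s * y)) 0 1.
Proof.
  intros Hf. apply (ex_RInt_continuous (V := R_CompleteNormedModule)). intros z _.
  apply (continuous_comp (fun s => s * y) f). apply cont_mul_lin. apply Hf.
Qed.

Lemma ex_RInt_cont (f : R -> R) a b : (forall t, continuous f t) -> ex_RInt f a b.
Proof. intros Hf. apply (ex_RInt_continuous (V := R_CompleteNormedModule)). intros; apply Hf. Qed.

Lemma avg_rint (f : R -> R) y : (forall t, continuous f t) -> y * avg f y = RInt f 0 y.
Proof.
  intros Hf. unfold avg.
  transitivity (RInt (fun s => y * (f (y * s + 0))) 0 1).
  - rewrite RInt_Rmult.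
    + f_equal. apply RInt_ext. intros x _. f_equal. ring.
    + apply (ex_RInt_continuous (V := R_CompleteNormedModule)). intros z _.
      apply (continuous_comp (fun s => y * s + 0) f).
      * apply (continuous_plus (fun s => y * s) (fun _ => 0)).
        apply (continuous_mult (fun _ => y) (fun s => s)); [apply continuous_const | apply continuous_id].
        apply continuous_const.
      * apply Hf.
  - rewrite (RInt_comp_lin (V := R_CompleteNormedModule)). f_equal; ring. replace (y * 0 + 0) with 0 by ring. replace (y * 1 + 0) with y by ring.
    apply ex_RInt_cont; auto.
Qed.

Lemma avg_0 (f : R -> R) : avg f 0 = f 0.
Proof.
  unfold avg. rewrite (RInt_ext _ (fun _ => f 0)). rewrite RInt_Rconst. ring.
  intros x _. f_equal. ring.
Qed.

Lemma RInt_cont_derive (f : R -> R) y : (forall t, continuous f t) -> is_derive (fun z => RInt f 0 z) y (f y).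
Proof.
  intros Hf. apply is_derive_RInt with (a := 0).
  - apply filter_forall. intros z. apply RInt_correct. apply ex_RInt_cont; auto.
  - apply Hf.
Qed.

Lemma avg_bound_const (f : R -> R) y c : (forall t, continuous f t) ->
  (forall s, 0 <= s <= 1 -> Rabs (f (s * y)) <= c) -> Rabs (avg f y) <= c.
Proof.
  intros Hf Hb. unfold avg. replace c with ((1 - 0) * c) by ring.
  apply abs_RInt_le_const. lra. apply avg_ex; auto. exact Hb.
Qed.

Lemma avg_cont (f : R -> R) : (forall t, continuous f t) -> forall y, continuous (avg f) y.
Proof.
  intros Hf y. destruct (Req_dec y 0) as [Hy|Hy].
  - subst y. apply ed_cont. intros eps.
    assert (He : 0 < eps / 2) by (generalize (cond_pos eps); lra).
    destruct (cont_ed _ _ (Hf 0) (mkposreal _ He)) as [d Hd]. simpl in Hd.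
    exists d. intros z Hz. rewrite avg_0.
    assert (Heq : avg f z - f 0 = avg (fun t => f t - f 0) z).
    { unfold avg. rewrite RInt_Rminus. rewrite RInt_Rconst. f_equal. ring.
      apply avg_ex; auto. apply ex_RInt_const. }
    rewrite Heq. eapply Rle_lt_trans.
    apply avg_bound_const with (c := eps / 2).
    + intros t. apply (continuous_minus f (fun _ => f 0)). apply Hf. apply continuous_const.
    + intros s Hs. left. apply Hd. rewrite Rminus_0_r in *. rewrite Rabs_mult.
      rewrite (Rabs_right s) by lra. eapply Rle_lt_trans; [|exact Hz]. 
      assert (0 <= Rabs z) by apply Rabs_pos. nra.
    + generalize (cond_pos eps); lra.
  - apply continuous_ext_loc with (g := fun z => RInt f 0 z / z).
    + generalize (locally_neq0 y Hy). apply filter_imp. intros z Hz. change (@eq R (RInt f 0 z / z) (avg f z)). change (z <> 0 :> R) in Hz.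
      rewrite <- (avg_rint f z Hf). field. exact Hz.
    + eapply derive_cont. apply is_derive_div.
      apply RInt_cont_derive; auto. apply (is_derive_id y). exact Hy.
Qed.

Ltac toR := match goal with |- @eq _ ?l ?r => change (@eq R l r) end.

Lemma cont_Rmult (f g : R -> R) x : continuous f x -> continuous g x -> continuous (fun y => f y * g y) x.
Proof. intros. apply (continuous_mult f g); auto. Qed.
Lemma cont_Rplus (f g : R -> R) x : continuous f x -> continuous g x -> continuous (fun y => f y + g y) x.
Proof. intros. apply (continuous_plus f g); auto. Qed.
Lemma cont_Rminus (f g : R -> R) x : continuous f x -> continuous g x -> continuous (fun y => f y - g y) x.
Proof. intros. apply (continuous_minus f g); auto. Qed.
Lemma cont_Ropp (f : R -> R) x : continuous f x -> continuous (fun y => - f y) x.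
Proof. intros. apply (continuous_opp f); auto. Qed.
Lemma cont_Rinv (f : R -> R) x : continuous f x -> f x <> 0 -> continuous (fun y => / f y) x.
Proof. intros. apply (continuous_comp f Rinv); auto. apply continuous_Rinv; auto. Qed.

Lemma avg_bound_fun (f h : R -> R) y : (forall t, continuous f t) -> (forall t, continuous h t) ->
  (forall s, 0 <= s <= 1 -> Rabs (f (s * y)) <= h s) -> Rabs (avg f y) <= RInt h 0 1.
Proof.
  intros Hf Hh Hb. unfold avg. eapply Rle_trans. apply abs_RInt_le. lra. apply avg_ex; auto.
  apply RInt_le. lra.
  - apply (ex_RInt_continuous (V := R_CompleteNormedModule)). intros z _.
    apply (continuous_comp (fun s => f (s * y)) Rabs).
    apply (continuous_comp (fun s => s * y) f). apply cont_mul_lin. apply Hf.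
    apply continuous_Rabs.
  - apply ex_RInt_cont; auto.
  - intros x Hx. apply Hb. lra.
Qed.

Lemma avg_minus (f g : R -> R) y : (forall t, continuous f t) -> (forall t, continuous g t) ->
  avg (fun t => f t - g t) y = avg f y - avg g y.
Proof. intros Hf Hg. unfold avg. apply RInt_Rminus; apply avg_ex; auto. Qed.

Lemma avg_const c y : avg (fun _ => c) y = c.
Proof. unfold avg. rewrite RInt_Rconst. ring. Qed.

Lemma avg_ext (f g : R -> R) y : (forall s, 0 <= s <= 1 -> f (s * y) = g (s * y)) -> avg f y = avg g y.
Proof. intros H. unfold avg. apply RInt_ext. intros x Hx. rewrite Rmin_left in Hx by lra.
  rewrite Rmax_right in Hx by lra. apply H. lra. Qed.

Lemma RInt_exp_bound b : 0 < b -> RInt (fun s => exp (b * s)) 0 1 <= exp b / b.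
Proof.
  intros Hb.
  assert (H : is_RInt (fun s => exp (b * s)) 0 1 (minus (exp (b * 1) / b) (exp (b * 0) / b))).
  { apply (is_RInt_derive (V := R_CompleteNormedModule) (fun s => exp (b * s) / b)).
    - intros x _. auto_derive. auto. field. lra.
    - intros x _. apply (continuous_comp (fun s => b * s) exp).
      apply (continuous_mult (fun _ => b) (fun s => s)); [apply continuous_const | apply continuous_id].
      apply continuity_pt_filterlim. apply derivable_continuous_pt. apply derivable_pt_exp. }
  rewrite (is_RInt_unique _ _ _ _ H). unfold minus, plus, opp; simpl.
  rewrite Rmult_1_r, Rmult_0_r, exp_0.
  assert (0 < / b) by (apply Rinv_0_lt_compat; lra). unfold Rdiv. nra.
Qed.

Lemma cont_exp_lin (b : R) t : continuous (fun s => exp (b * s)) t.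
Proof.
  apply (continuous_comp (fun s => b * s) exp).
  apply (continuous_mult (fun _ => b) (fun s => s)); [apply continuous_const | apply continuous_id].
  apply continuity_pt_filterlim. apply derivable_continuous_pt. apply derivable_pt_exp.
Qed.

Lemma geom_le (x a C q : R) : 0 <= q < 1 -> 0 <= C -> (forall n, x <= a + C * q ^ n) -> x <= a.
Proof.
  intros Hq HC H. destruct (Rle_or_lt x a) as [Hle|Hlt]; auto. exfalso.
  assert (Hp : 0 < (x - a) / (C + 1)) by (apply Rdiv_lt_0_compat; lra).
  assert (Hq' : Rabs q < 1) by (rewrite Rabs_right; lra).
  destruct (pow_lt_1_zero q Hq' _ Hp) as [N HN].
  specialize (HN N (le_n N)). specialize (H N). rewrite Rabs_right in HN by (apply Rle_ge, pow_le; lra).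
  assert (C * q ^ N <= C * ((x - a) / (C + 1))) by (apply Rmult_le_compat_l; lra).
  assert (C * ((x - a) / (C + 1)) < x - a).
  { unfold Rdiv. rewrite <- Rmult_assoc. apply Rmult_lt_reg_r with (C + 1). lra.
    rewrite Rmult_assoc, Rinv_l by lra. nra. }
  lra.
Qed.

Lemma bootstrap (e : R -> R) (c q d0 E0 : R) (k : nat) :
  0 <= q < 1 -> 0 <= c -> 0 <= E0 ->
  (forall y, Rabs y <= d0 -> Rabs (e y) <= E0) ->
  (forall y, Rabs y <= d0 -> forall B E, 0 <= B -> 0 <= E ->
     (forall t, Rabs t <= Rabs y -> Rabs (e t) <= B * Rabs t ^ k + E) ->
     Rabs (e y) <= (c + q * B) * Rabs y ^ k + q * E) ->
  forall y, Rabs y <= d0 -> Rabs (e y) <= c / (1 - q) * Rabs y ^ k.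
Proof.
  intros Hq Hc HE0 H0 Hstep.
  assert (HB : 0 <= c / (1 - q)) by (apply Rdiv_le_0_compat; lra).
  assert (Hn : forall n y, Rabs y <= d0 -> Rabs (e y) <= c / (1 - q) * Rabs y ^ k + E0 * q ^ n).
  { induction n as [|n IH]; intros y Hy.
    - simpl. rewrite Rmult_1_r. assert (0 <= c / (1 - q) * Rabs y ^ k).
      { apply Rmult_le_pos; auto. apply pow_le, Rabs_pos. } specialize (H0 y Hy). lra.
    - eapply Rle_trans. apply (Hstep y Hy (c / (1 - q)) (E0 * q ^ n)); auto.
      apply Rmult_le_pos; auto. apply pow_le; lra.
      intros t Ht. apply IH. lra.
      right. simpl. field_simplify. reflexivity. lra. lra. }
  intros y Hy. apply (geom_le _ _ E0 q); auto.
Qed.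

Lemma picard_limit (u : nat -> R -> R) (q : R) (W : R -> R) :
  0 <= q < 1 -> (forall y, 0 <= W y) ->
  (forall n y, Rabs (u (S n) y - u n y) <= q ^ n * W y) ->
  exists U : R -> R, (forall y, is_lim_seq (fun n => u n y) (U y)) /\
     forall n y, Rabs (U y - u n y) <= q ^ n * W y / (1 - q).
Proof.
  intros Hq HW Hs.
  assert (Htel : forall n k y, Rabs (u (n + k)%nat y - u n y) <= (q ^ n - q ^ (n + k)) / (1 - q) * W y).
  { intros n k y. induction k as [|k IH].
    - rewrite Nat.add_0_r. replace (u n y - u n y) with 0 by ring. rewrite Rabs_R0.
      replace (q ^ n - q ^ n) with 0 by ring. unfold Rdiv. rewrite Rmult_0_l, Rmult_0_l. lra.
    - replace (n + S k)%nat with (S (n + k)) by lia.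
      replace (u (S (n + k)) y - u n y) with ((u (S (n + k)) y - u (n + k)%nat y) + (u (n + k)%nat y - u n y)) by ring.
      eapply Rle_trans. apply Rabs_triang.
      specialize (Hs (n + k)%nat y).
      assert (E : (q ^ n - q ^ S (n + k)) / (1 - q) * W y = q ^ (n + k) * W y + (q ^ n - q ^ (n + k)) / (1 - q) * W y).
      { simpl. field. lra. }
      rewrite E. lra. }
  assert (Hb : forall n m y, (n <= m)%nat -> Rabs (u m y - u n y) <= q ^ n * W y / (1 - q)).
  { intros n m y Hnm. replace m with (n + (m - n))%nat by lia.
    eapply Rle_trans. apply Htel.
    assert (Hr : 0 < / (1 - q)) by (apply Rinv_0_lt_compat; lra).
    assert (0 <= q ^ (n + (m - n)) * (/ (1 - q) * W y)).
    { apply Rmult_le_pos. apply pow_le; lra. apply Rmult_le_pos. lra. apply HW. }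
    unfold Rdiv. 
    replace ((q ^ n - q ^ (n + (m - n))) * / (1 - q) * W y) with (q ^ n * W y * / (1 - q) - q ^ (n + (m - n)) * (/ (1 - q) * W y)) by ring.
    lra. }
  assert (Hc : forall y, ex_finite_lim_seq (fun n => u n y)).
  { intros y. apply ex_lim_seq_cauchy_corr. intros eps.
    assert (Hp : 0 < eps * (1 - q) / (2 * (W y + 1))).
    { apply Rdiv_lt_0_compat. apply Rmult_lt_0_compat. apply cond_pos. lra. specialize (HW y). lra. }
    assert (Hq' : Rabs q < 1) by (rewrite Rabs_right; lra).
    destruct (pow_lt_1_zero q Hq' _ Hp) as [N HN]. exists N. intros n m Hn Hm.
    specialize (HN N (le_n N)). rewrite Rabs_right in HN by (apply Rle_ge, pow_le; lra).
    replace (u n y - u m y) with ((u n y - u N y) - (u m y - u N y)) by ring.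
    eapply Rle_lt_trans. apply Rabs_triang. rewrite Rabs_Ropp.
    assert (H1 := Hb N n y Hn). assert (H2 := Hb N m y Hm).
    assert (H3 : q ^ N * W y / (1 - q) < eps / 2).
    { specialize (HW y). assert (0 <= q ^ N) by (apply pow_le; lra).
      apply Rmult_lt_compat_r with (r := W y + 1) in HN; [|lra].
      replace (eps * (1 - q) / (2 * (W y + 1)) * (W y + 1)) with (eps * (1 - q) / 2) in HN by (field; lra).
      apply Rmult_lt_reg_r with (1 - q); [lra|].
      replace (q ^ N * W y / (1 - q) * (1 - q)) with (q ^ N * W y) by (field; lra).
      nra. }
    lra. }
  exists (fun y => Lim_seq (fun n => u n y)). split.
  - intros y. apply Lim_seq_correct'. apply Hc.
  - intros n y.
    assert (Hl := Lim_seq_correct' _ (Hc y)).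
    assert (Hl2 := is_lim_seq_abs _ _ (is_lim_seq_minus' _ _ _ _ Hl (is_lim_seq_const (u n y)))).
    simpl in Hl2.
    assert (Hle := is_lim_seq_le_loc _ _ _ _ (ltac:(exists n; intros m Hm; apply Hb; exact Hm)) Hl2 (is_lim_seq_const (q ^ n * W y / (1 - q)))).
    simpl in Hle. exact Hle.
Qed.

Section Main.
Variable phi : R -> R -> R.
Hypothesis Hc2 : C2_2d phi.
Hypothesis Hpos : forall y z, 0 <= z -> 0 < phi y z.
Hypothesis Hinf : forall y z, 0 <= z -> 0 <= pd_z phi y z.
Variable M : R.
Hypothesis HM : forall y z, 0 <= z -> pd_z phi y z <= M.
Hypothesis Hd01 : pd_z phi 0 1 < 1.
Hypothesis H01 : phi 0 1 = 1.
Hypothesis Huniq : forall a, 0 < a -> a = phi 0 (/ phi 0 (/ a)) -> a = 1.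


Lemma phi_cont y z : continuity_2d_pt phi y z.
Proof. destruct Hc2 as [_ [_ [_ H]]]. apply H. Qed.

Lemma pdz_cont y z : continuity_2d_pt (pd_z phi) y z.
Proof. destruct Hc2 as [_ [_ [_ H]]]. apply H. Qed.

Lemma pdy_cont y z : continuity_2d_pt (pd_y phi) y z.
Proof. destruct Hc2 as [_ [_ [_ H]]]. apply H. Qed.

Lemma dz_is y z : is_derive (fun t => phi y t) z (pd_z phi y z).
Proof. destruct Hc2 as [H _]. apply Derive_correct. apply H. Qed.

Lemma M_nonneg : 0 <= M.
Proof. apply Rle_trans with (pd_z phi 0 0). apply Hinf; lra. apply HM; lra. Qed.

Lemma mvt_z y z1 z2 L : z1 <= z2 -> (forall z, z1 <= z <= z2 -> 0 <= pd_z phi y z <= L) ->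
  0 <= phi y z2 - phi y z1 <= L * (z2 - z1).
Proof.
  intros H12 Hb.
  destruct (MVT_gen (fun t => phi y t) z1 z2 (pd_z phi y)) as [c [Hc Heq]].
  - intros x _. apply dz_is.
  - intros x _. apply continuity_pt_filterlim. eapply derive_cont. apply dz_is.
  - rewrite Rmin_left in Hc by lra. rewrite Rmax_right in Hc by lra.
    rewrite Heq. specialize (Hb c Hc). split; nra.
Qed.

Lemma mvt_z_abs y z1 z2 L : (forall z, Rmin z1 z2 <= z <= Rmax z1 z2 -> 0 <= pd_z phi y z <= L) ->
  Rabs (phi y z1 - phi y z2) <= L * Rabs (z1 - z2).
Proof.
  intros Hb. destruct (Rle_dec z1 z2) as [H|H].
  - rewrite Rmin_left in Hb by lra. rewrite Rmax_right in Hb by lra.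
    destruct (mvt_z y z1 z2 L H Hb).
    rewrite Rabs_minus_sym, Rabs_right by lra. rewrite Rabs_minus_sym, Rabs_right by lra. lra.
  - rewrite Rmin_right in Hb by lra. rewrite Rmax_left in Hb by lra.
    destruct (mvt_z y z2 z1 L ltac:(lra) Hb).
    rewrite Rabs_right by lra. rewrite Rabs_right by lra. lra.
Qed.

Lemma phi_mono y z1 z2 : 0 <= z1 <= z2 -> phi y z1 <= phi y z2 <= phi y z1 + M * (z2 - z1).
Proof.
  intros H. destruct (mvt_z y z1 z2 M) as [H1 H2]; [lra| |lra].
  intros z Hz. split. apply Hinf; lra. apply HM; lra.
Qed.

Lemma phi_lip y z1 z2 : 0 <= z1 -> 0 <= z2 -> Rabs (phi y z1 - phi y z2) <= M * Rabs (z1 - z2).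
Proof.
  intros H1 H2. apply mvt_z_abs. intros z Hz. split. apply Hinf.
  apply Rle_trans with (2 := proj1 Hz). apply Rmin_glb; lra. apply HM.
  apply Rle_trans with (2 := proj1 Hz). apply Rmin_glb; lra.
Qed.

Lemma bounds_Y Y : 0 <= Y -> exists m Mx, 0 < m <= 1/2 /\ 2 <= Mx /\
  (forall t z, Rabs t <= Y -> 0 <= z -> m <= phi t z) /\
  (forall t z, Rabs t <= Y -> 0 <= z <= / m -> phi t z <= Mx).
Proof.
  intros HY.
  assert (Hc : forall c, -Y <= c <= Y -> continuity_pt (fun t => phi t 0) c).
  { intros c _. apply continuity_pt_filterlim.
    apply (cont2_comp phi (fun t => t) (fun _ => 0)). apply phi_cont. apply continuous_id. apply continuous_const. }
  destruct (continuity_ab_min (fun t => phi t 0) (-Y) Y ltac:(lra) Hc) as [tm [Hm1 Hm2]].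
  destruct (continuity_ab_maj (fun t => phi t 0) (-Y) Y ltac:(lra) Hc) as [tM [HM1 HM2]].
  assert (Hc0 : 0 < phi tm 0) by (apply Hpos; lra).
  set (m := Rmin (phi tm 0) (1/2)).
  assert (Hm : 0 < m <= 1/2). { split. apply Rmin_pos; lra. apply Rmin_r. }
  exists m, (Rmax (phi tM 0 + M / m) 2). split; [exact Hm|]. split; [apply Rmax_r|]. split.
  - intros t z Ht Hz. apply Rabs_le_between in Ht.
    apply Rle_trans with (phi t 0). apply Rle_trans with (phi tm 0). apply Rmin_l. apply Hm1; lra.
    apply phi_mono; lra.
  - intros t z Ht Hz. apply Rabs_le_between in Ht.
    apply Rle_trans with (2 := Rmax_l _ _).
    destruct (phi_mono t 0 z ltac:(lra)) as [_ H2].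
    assert (phi t 0 <= phi tM 0) by (apply HM1; lra).
    assert (M * (z - 0) <= M / m).
    { unfold Rdiv. apply Rmult_le_compat_l. apply M_nonneg. lra. }
    lra.
Qed.

Lemma cont2_ed (f : R -> R -> R) x y : continuity_2d_pt f x y ->
  forall eps, 0 < eps -> exists d, 0 < d /\ forall u v, Rabs (u - x) < d -> Rabs (v - y) < d -> Rabs (f u v - f x y) < eps.
Proof.
  intros H eps He. destruct (H (mkposreal _ He)) as [d Hd]. exists d. split. apply cond_pos. exact Hd.
Qed.

Lemma inv_near x e : 0 <= e <= 1/2 -> Rabs (x - 1) <= e -> Rabs (/ x - 1) <= 2 * e /\ 1/2 <= x.
Proof.
  intros He Hx. apply Rabs_le_between in Hx.
  assert (Hx0 : 0 < x) by lra. split; [|lra].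
  replace (/ x - 1) with ((1 - x) / x) by (field; lra).
  unfold Rdiv. rewrite Rabs_mult, Rabs_inv, (Rabs_right x) by lra.
  apply Rmult_le_reg_r with x. lra. rewrite Rmult_assoc, Rinv_l by lra.
  assert (Rabs (1 - x) <= e) by (apply Rabs_le_between; lra). nra.
Qed.

Lemma near01 : exists q0 eps delta, 0 <= q0 < 1 /\ 0 < eps <= 1/2 /\ 0 < delta <= 1 /\
  (forall t x1 x2, Rabs t <= delta -> Rabs (x1 - 1) <= eps -> Rabs (x2 - 1) <= eps ->
     Rabs (phi t (/ x1) - phi t (/ x2)) <= q0 * Rabs (x1 - x2)) /\
  (forall t x, Rabs t <= delta -> Rabs (x - 1) <= eps -> Rabs (phi t (/ x) - 1) <= eps).
Proof.
  set (p0 := pd_z phi 0 1).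
  assert (Hp0 : 0 <= p0 < 1). { split. apply Hinf; lra. apply Hd01. }
  set (eta := (1 - p0) / 4).
  destruct (cont2_ed _ _ _ (pdz_cont 0 1) eta ltac:(unfold eta; lra)) as [r1 [Hr1 H1]].
  set (e := Rmin ((1 - p0) / 8) (r1 / 4)).
  assert (He : 0 < e <= (1 - p0) / 8).
  { split. apply Rmin_pos; lra. apply Rmin_l. }
  assert (He2 : e <= r1 / 4) by apply Rmin_r.
  set (q0 := (p0 + eta) / ((1 - e) * (1 - e))).
  assert (Hq0 : 0 <= q0 < 1).
  { unfold q0, eta. split. apply Rdiv_le_0_compat. lra. nra.
    apply Rmult_lt_reg_r with ((1 - e) * (1 - e)). nra.
    unfold Rdiv. rewrite Rmult_assoc, Rinv_l by nra. nra. }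
  assert (Hq0e : 0 < (1 - q0) * e) by (apply Rmult_lt_0_compat; lra).
  destruct (cont2_ed _ _ _ (phi_cont 0 1) _ Hq0e) as [r2 [Hr2 H2]].
  set (d := Rmin (Rmin r1 r2) 1 / 2).
  assert (Hd : 0 < d <= 1).
  { unfold d. assert (0 < Rmin (Rmin r1 r2) 1) by (repeat apply Rmin_pos; lra).
    assert (Rmin (Rmin r1 r2) 1 <= 1) by apply Rmin_r. lra. }
  assert (Hdr1 : d < r1).
  { unfold d. assert (Rmin (Rmin r1 r2) 1 <= r1) by (eapply Rle_trans; [apply Rmin_l|apply Rmin_l]).
    assert (0 < Rmin (Rmin r1 r2) 1) by (repeat apply Rmin_pos; lra). lra. }
  assert (Hdr2 : d < r2).
  { unfold d. assert (Rmin (Rmin r1 r2) 1 <= r2) by (eapply Rle_trans; [apply Rmin_l|apply Rmin_r]).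
    assert (0 < Rmin (Rmin r1 r2) 1) by (repeat apply Rmin_pos; lra). lra. }
  assert (Lip : forall t x1 x2, Rabs t <= d -> Rabs (x1 - 1) <= e -> Rabs (x2 - 1) <= e ->
     Rabs (phi t (/ x1) - phi t (/ x2)) <= q0 * Rabs (x1 - x2)).
  { intros t x1 x2 Ht Hx1 Hx2.
    destruct (inv_near x1 e ltac:(lra) Hx1) as [Hz1 Hx1'].
    destruct (inv_near x2 e ltac:(lra) Hx2) as [Hz2 Hx2'].
    eapply Rle_trans. apply (mvt_z_abs t _ _ (p0 + eta)).
    - intros z Hz. split. apply Hinf.
      apply Rle_trans with (2 := proj1 Hz). apply Rmin_glb; apply Rlt_le, Rinv_0_lt_compat; lra.
      assert (Hzr : Rabs (z - 1) < r1).
      { apply Rabs_le_between in Hz1. apply Rabs_le_between in Hz2.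
        assert (Rmin (/ x1) (/ x2) >= 1 - 2 * e) by (apply Rle_ge, Rmin_glb; lra).
        assert (Rmax (/ x1) (/ x2) <= 1 + 2 * e) by (apply Rmax_lub; lra).
        apply Rabs_lt_between. lra. }
      assert (Htr : Rabs (t - 0) < r1) by (rewrite Rminus_0_r; lra).
      specialize (H1 t z Htr Hzr). fold p0 in H1. apply Rabs_lt_between in H1. lra.
    - replace (/ x1 - / x2) with ((x2 - x1) / (x1 * x2)) by (field; lra).
      unfold Rdiv. rewrite Rabs_mult, Rabs_inv, (Rabs_right (x1 * x2)) by nra.
      rewrite Rabs_minus_sym.
      unfold q0. unfold Rdiv.
      apply Rabs_le_between in Hx1. apply Rabs_le_between in Hx2.
      assert (Hprod : (1 - e) * (1 - e) <= x1 * x2) by nra.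
      assert (/ (x1 * x2) <= / ((1 - e) * (1 - e))) by (apply Rinv_le_contravar; nra).
      assert (0 <= p0 + eta) by (unfold eta; lra).
      assert (0 <= Rabs (x1 - x2)) by apply Rabs_pos.
      assert (0 <= / (x1 * x2)) by (apply Rlt_le, Rinv_0_lt_compat; nra).
      assert (0 <= (p0 + eta) * Rabs (x1 - x2)) by nra.
      apply Rle_trans with ((p0 + eta) * Rabs (x1 - x2) * / ((1 - e) * (1 - e))); [|right; ring].
      match goal with |- ?a * (?b * ?c) <= _ => replace (a * (b * c)) with ((a * b) * c) by ring end.
      apply Rmult_le_compat_l; lra. }
  exists q0, e, d. split; [exact Hq0|]. split; [lra|]. split; [exact Hd|]. split; [exact Lip|].
  intros t x Ht Hx.
  assert (A1 := Lip t x 1 Ht Hx ltac:(replace (1-1) with 0 by ring; rewrite Rabs_R0; lra)).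
  rewrite Rinv_1 in A1.
  assert (Htr : Rabs (t - 0) < r2) by (rewrite Rminus_0_r; lra).
  assert (A2 := H2 t 1 Htr ltac:(replace (1-1) with 0 by ring; rewrite Rabs_R0; lra)).
  rewrite H01 in A2.
  replace (phi t (/ x) - 1) with ((phi t (/ x) - phi t 1) + (phi t 1 - 1)) by ring.
  eapply Rle_trans. apply Rabs_triang.
  assert (q0 * Rabs (x - 1) <= q0 * e) by (apply Rmult_le_compat_l; lra). lra.
Qed.

Lemma exp_mono x y : x <= y -> exp x <= exp y.
Proof. intros H. destruct (Rle_lt_or_eq_dec _ _ H) as [H'|H']. left. apply exp_increasing; auto. subst; lra. Qed.

Lemma lip1_cont (f : R -> R) x : (forall a b, Rabs (f a - f b) <= Rabs (a - b)) -> continuous f x.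
Proof. intros H. apply ed_cont. intros eps. exists eps. intros y Hy. eapply Rle_lt_trans. apply H. exact Hy. Qed.

Lemma avg_in (f : R -> R) y a b : (forall t, continuous f t) ->
  (forall s, 0 <= s <= 1 -> a <= f (s * y) <= b) -> a <= avg f y <= b.
Proof.
  intros Hf H.
  assert (E : avg f y - (a + b) / 2 = avg (fun t => f t - (a + b) / 2) y).
  { rewrite avg_minus, avg_const. reflexivity. exact Hf. intros; apply continuous_const. }
  assert (Hb : Rabs (avg (fun t => f t - (a + b) / 2) y) <= (b - a) / 2).
  { apply avg_bound_const. intros t. apply (continuous_minus f (fun _ => (a + b) / 2)). apply Hf. apply continuous_const.
    intros s Hs. specialize (H s Hs). apply Rabs_le_between. lra. }
  rewrite <- E in Hb. apply Rabs_le_between in Hb. lra.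
Qed.

Lemma Rmax_Rmin_lip (lo hi a b : R) : lo <= hi -> Rabs (Rmax lo (Rmin hi a) - Rmax lo (Rmin hi b)) <= Rabs (a - b).
Proof.
  intros H. unfold Rmax, Rmin.
  destruct (Rle_or_lt 0 (a - b)) as [h|h]; [rewrite (Rabs_right (a - b)) by lra | rewrite (Rabs_left (a - b)) by lra];
  repeat destruct Rle_dec; apply Rabs_le_between; lra.
Qed.

Lemma avg_ge (f : R -> R) y a : (forall t, continuous f t) ->
  (forall s, 0 <= s <= 1 -> a <= f (s * y)) -> a <= avg f y.
Proof.
  intros Hf H. unfold avg. assert (Ea : @eq R (@RInt R_CompleteNormedModule (fun _ => a) 0 1) a) by (rewrite RInt_Rconst; ring).
  rewrite <- Ea at 1.
  apply RInt_le. lra. apply ex_RInt_const. apply avg_ex; auto. intros x Hx. apply H. lra.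
Qed.

Lemma avg_le (f : R -> R) y a : (forall t, continuous f t) ->
  (forall s, 0 <= s <= 1 -> f (s * y) <= a) -> avg f y <= a.
Proof.
  intros Hf H. unfold avg. assert (Ea : @eq R (@RInt R_CompleteNormedModule (fun _ => a) 0 1) a) by (rewrite RInt_Rconst; ring).
  rewrite <- Ea.
  apply RInt_le. lra. apply avg_ex; auto. apply ex_RInt_const. intros x Hx. apply H. lra.
Qed.

Lemma at0 v0 : 0 < v0 -> v0 = phi 0 (/ v0) -> v0 = 1.
Proof. intros H Ha. apply Huniq. exact H. rewrite <- Ha. exact Ha. Qed.

Lemma true_integrand_cont (v : R -> R) : (forall t, continuous v t) -> (forall t, 0 < v t) ->
  forall t, continuous (fun t => phi t (/ v t)) t.
Proof.
  intros Hv Hp t. apply (cont2_comp phi (fun t => t) (fun t => / v t)). apply phi_cont. apply continuous_id.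
  apply (continuous_comp v Rinv). apply Hv. apply continuous_Rinv. specialize (Hp t). lra.
Qed.

Section Trunc.
Variables (Y m Mx q0 e d : R).
Hypothesis HY : 1 <= Y.
Hypothesis Hm : 0 < m <= 1/2.
Hypothesis HMx : 2 <= Mx.
Hypothesis Hlow : forall t z, Rabs t <= Y -> 0 <= z -> m <= phi t z.
Hypothesis Hup : forall t z, Rabs t <= Y -> 0 <= z <= / m -> phi t z <= Mx.
Hypothesis Hq0 : 0 <= q0 < 1.
Hypothesis He : 0 < e <= 1/2.
Hypothesis Hd : 0 < d <= 1.
Hypothesis HN1 : forall t x1 x2, Rabs t <= d -> Rabs (x1 - 1) <= e -> Rabs (x2 - 1) <= e ->
     Rabs (phi t (/ x1) - phi t (/ x2)) <= q0 * Rabs (x1 - x2).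
Hypothesis HN2 : forall t x, Rabs t <= d -> Rabs (x - 1) <= e -> Rabs (phi t (/ x) - 1) <= e.

Definition cl x := Rmax m (Rmin Mx x).
Definition cy t := Rmax (-Y) (Rmin Y t).
Definition Phi t x := phi (cy t) (/ cl x).
Definition Top (u : R -> R) := avg (fun t => Phi t (u t)).
Fixpoint pic (n : nat) : R -> R := match n with O => fun _ => 1 | S k => Top (pic k) end.
Definition qq := Rmax q0 (1/2).
Definition L1 := M / (m * m).
Definition Lmax := L1 + 1.
Definition KK (d' : R) := Lmax / (qq * d').

Lemma cl_bd x : m <= cl x <= Mx.
Proof. unfold cl, Rmax, Rmin. repeat destruct Rle_dec; lra. Qed.
Lemma cl_id x : m <= x <= Mx -> cl x = x.
Proof. intros H. unfold cl, Rmax, Rmin. repeat destruct Rle_dec; lra. Qed.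
Lemma cy_bd t : Rabs (cy t) <= Y.
Proof. apply Rabs_le_between. unfold cy, Rmax, Rmin. repeat destruct Rle_dec; lra. Qed.
Lemma cy_id t : Rabs t <= Y -> cy t = t.
Proof. intros H. apply Rabs_le_between in H. unfold cy, Rmax, Rmin. repeat destruct Rle_dec; lra. Qed.
Lemma cl_cont x : continuous cl x.
Proof. apply lip1_cont. intros. apply Rmax_Rmin_lip. lra. Qed.
Lemma cy_cont x : continuous cy x.
Proof. apply lip1_cont. intros. apply Rmax_Rmin_lip. lra. Qed.

Lemma qq_bd : 1/2 <= qq < 1 /\ q0 <= qq.
Proof. unfold qq, Rmax. destruct Rle_dec; lra. Qed.
Lemma L1_nonneg : 0 <= L1.
Proof. unfold L1. apply Rdiv_le_0_compat. apply M_nonneg. nra. Qed.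

Lemma inv_cl_bd x : 0 < / cl x <= / m.
Proof. destruct (cl_bd x). split. apply Rinv_0_lt_compat; lra. apply Rinv_le_contravar; lra. Qed.

Lemma Phi_bd t x : m <= Phi t x <= Mx.
Proof.
  unfold Phi. destruct (inv_cl_bd x). split.
  apply Hlow. apply cy_bd. lra. apply Hup. apply cy_bd. lra.
Qed.

Lemma Phi_lip t a b : Rabs (Phi t a - Phi t b) <= L1 * Rabs (a - b).
Proof.
  unfold Phi. destruct (inv_cl_bd a). destruct (inv_cl_bd b).
  eapply Rle_trans. apply phi_lip; lra.
  pose proof (cl_bd a). pose proof (cl_bd b).
  replace (/ cl a - / cl b) with ((cl b - cl a) / (cl a * cl b)) by (field; lra).
  unfold Rdiv. rewrite Rabs_mult, Rabs_inv, (Rabs_right (cl a * cl b)) by nra.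
  rewrite Rabs_minus_sym.
  assert (Hc1 : Rabs (cl a - cl b) <= Rabs (a - b)) by (apply Rmax_Rmin_lip; lra).
  assert (Hcc2 : / (cl a * cl b) <= / (m * m)) by (apply Rinv_le_contravar; nra).
  assert (0 <= / (cl a * cl b)) by (apply Rlt_le, Rinv_0_lt_compat; nra).
  assert (0 <= Rabs (cl a - cl b)) by apply Rabs_pos.
  unfold L1, Rdiv. pose proof M_nonneg.
  apply Rle_trans with (M * (Rabs (a - b) * / (m * m))); [|right; ring].
  apply Rmult_le_compat_l. lra. apply Rmult_le_compat; lra.
Qed.

Lemma near_cl x : Rabs (x - 1) <= e -> cl x = x.
Proof. intros H. apply Rabs_le_between in H. apply cl_id. lra. Qed.

Lemma Phi_near1 t x1 x2 : Rabs t <= d -> Rabs (x1 - 1) <= e -> Rabs (x2 - 1) <= e ->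
  Rabs (Phi t x1 - Phi t x2) <= q0 * Rabs (x1 - x2).
Proof.
  intros Ht Ha Hb. unfold Phi. rewrite cy_id by lra. rewrite (near_cl x1 Ha), (near_cl x2 Hb). auto.
Qed.

Lemma Phi_near2 t x : Rabs t <= d -> Rabs (x - 1) <= e -> Rabs (Phi t x - 1) <= e.
Proof. intros Ht H. unfold Phi. rewrite cy_id by lra. rewrite (near_cl x H). auto. Qed.

Lemma Phi_comp_cont (u : R -> R) : (forall t, continuous u t) -> forall t, continuous (fun t => Phi t (u t)) t.
Proof.
  intros Hu t. unfold Phi. apply (cont2_comp phi cy (fun t => / cl (u t))).
  apply phi_cont. apply cy_cont.
  apply (continuous_comp u (fun x => / cl x)). apply Hu.
  apply (continuous_comp cl Rinv). apply cl_cont. apply continuous_Rinv. destruct (cl_bd (u t)); lra.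
Qed.

Lemma Top_cont u : (forall t, continuous u t) -> forall y, continuous (Top u) y.
Proof. intros Hu. apply avg_cont. apply Phi_comp_cont. exact Hu. Qed.

Lemma Top_bd u y : (forall t, continuous u t) -> m <= Top u y <= Mx.
Proof. intros Hu. apply avg_in. apply Phi_comp_cont. exact Hu. intros. apply Phi_bd. Qed.

Lemma abs_scale s y : 0 <= s <= 1 -> Rabs (s * y) <= Rabs y.
Proof. intros Hs. rewrite Rabs_mult, (Rabs_right s) by lra. pose proof (Rabs_pos y). nra. Qed.

Lemma abs_scale_eq s y : 0 <= s -> Rabs (s * y) = s * Rabs y.
Proof. intros Hs. rewrite Rabs_mult, (Rabs_right s) by lra. reflexivity. Qed.

Lemma Top_near u : (forall t, continuous u t) -> (forall t, Rabs t <= d -> Rabs (u t - 1) <= e) ->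
  forall y, Rabs y <= d -> Rabs (Top u y - 1) <= e.
Proof.
  intros Hu Hn y Hy. unfold Top.
  replace (avg (fun t => Phi t (u t)) y - 1) with (avg (fun t => Phi t (u t) - 1) y).
  - apply avg_bound_const. intros t. apply (continuous_minus (fun t => Phi t (u t)) (fun _ => 1)).
    apply Phi_comp_cont; auto. apply continuous_const.
    intros s Hs. assert (Rabs (s * y) <= d) by (eapply Rle_trans; [apply abs_scale; auto| exact Hy]).
    apply Phi_near2. auto. apply Hn. auto.
  - rewrite avg_minus, avg_const. reflexivity. apply Phi_comp_cont; auto. intros; apply continuous_const.
Qed.

Lemma contraction (d' : R) (u1 u2 : R -> R) (D y : R) : 0 < d' <= d ->
  (forall t, continuous u1 t) -> (forall t, continuous u2 t) ->
  (forall t, Rabs t <= d' -> Rabs (u1 t - 1) <= e) -> (forall t, Rabs t <= d' -> Rabs (u2 t - 1) <= e) ->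
  0 <= D -> (forall t, Rabs t <= Rabs y -> Rabs (u1 t - u2 t) <= D * exp (KK d' * Rabs t)) ->
  Rabs (Top u1 y - Top u2 y) <= qq * D * exp (KK d' * Rabs y).
Proof.
  intros Hd' Hu1 Hu2 Hn1 Hn2 HD Hb.
  destruct qq_bd as [Hqq Hqq0].
  assert (HK : 0 < KK d').
  { unfold KK, Lmax. apply Rdiv_lt_0_compat. pose proof L1_nonneg. lra. nra. }
  assert (Hc1 := Phi_comp_cont u1 Hu1). assert (Hc2' := Phi_comp_cont u2 Hu2).
  unfold Top. rewrite <- avg_minus by auto.
  destruct (Rle_or_lt (Rabs y) d') as [Hy|Hy].
  - apply avg_bound_const.
    + intros t. apply (continuous_minus (fun t => Phi t (u1 t)) (fun t => Phi t (u2 t))); auto.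
    + intros s Hs. assert (Hsy := abs_scale s y Hs).
      eapply Rle_trans. apply Phi_near1. lra. apply Hn1. lra. apply Hn2. lra.
      eapply Rle_trans. apply Rmult_le_compat_l. lra. apply Hb. exact Hsy.
      assert (exp (KK d' * Rabs (s * y)) <= exp (KK d' * Rabs y)).
      { apply exp_mono. apply Rmult_le_compat_l; lra. }
      assert (0 <= D * exp (KK d' * Rabs (s * y))) by (apply Rmult_le_pos; [lra| apply Rlt_le, exp_pos]).
      rewrite Rmult_assoc. apply Rle_trans with (q0 * (D * exp (KK d' * Rabs y))).
      apply Rmult_le_compat_l. lra. apply Rmult_le_compat_l; lra.
      apply Rmult_le_compat_r. apply Rmult_le_pos; [lra| apply Rlt_le, exp_pos]. lra.
  - set (b := KK d' * Rabs y).
    assert (Hb0 : 0 < b) by (unfold b; apply Rmult_lt_0_compat; lra).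
    eapply Rle_trans. apply (avg_bound_fun _ (fun s => Lmax * D * exp (b * s))).
    + intros t. apply (continuous_minus (fun t => Phi t (u1 t)) (fun t => Phi t (u2 t))); auto.
    + intros t. apply (continuous_mult (fun _ => Lmax * D) (fun s => exp (b * s))).
      apply continuous_const. apply cont_exp_lin.
    + intros s Hs. eapply Rle_trans. apply Phi_lip.
      eapply Rle_trans. apply Rmult_le_compat_l. apply L1_nonneg. apply Hb. apply abs_scale; auto.
      rewrite abs_scale_eq by lra.
      replace (b * s) with (KK d' * (s * Rabs y)) by (unfold b; ring).
      assert (0 <= D * exp (KK d' * (s * Rabs y))) by (apply Rmult_le_pos; [lra| apply Rlt_le, exp_pos]).
      unfold Lmax. rewrite Rmult_assoc. apply Rmult_le_compat_r. auto. lra.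
    + rewrite RInt_Rmult by (apply ex_RInt_cont; apply cont_exp_lin).
      assert (HI := RInt_exp_bound b Hb0).
      assert (HL : 0 <= Lmax * D) by (apply Rmult_le_pos; [unfold Lmax; pose proof L1_nonneg; lra| lra]).
      eapply Rle_trans. apply Rmult_le_compat_l. exact HL. exact HI.
      unfold b. 
      assert (Hexp : 0 < exp (KK d' * Rabs y)) by apply exp_pos.
      assert (E : Lmax = qq * KK d' * d') by (unfold KK; field; lra).
      rewrite E.
      apply Rle_trans with (qq * D * exp (KK d' * Rabs y) * (d' / Rabs y)).
      * right. field. split; lra.
      * assert (d' / Rabs y <= 1) by (apply Rle_div_l; lra).
        assert (0 <= qq * D * exp (KK d' * Rabs y)) by (apply Rmult_le_pos; [apply Rmult_le_pos|]; lra).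
        assert (0 <= d' / Rabs y) by (apply Rdiv_le_0_compat; lra).
        nra.
Qed.


Lemma pic_cont n : forall t, continuous (pic n) t.
Proof. induction n as [|n IH]; intros t. apply continuous_const. simpl. apply Top_cont. exact IH. Qed.

Lemma pic_near n : forall t, Rabs t <= d -> Rabs (pic n t - 1) <= e.
Proof.
  induction n as [|n IH]; intros t Ht. simpl. replace (1 - 1) with 0 by ring. rewrite Rabs_R0. lra.
  simpl. apply Top_near. apply pic_cont. exact IH. exact Ht.
Qed.

Definition WW y := Mx * exp (KK d * Rabs y).

Lemma exp_ge1 x : 0 <= x -> 1 <= exp x.
Proof. intros H. pose proof (exp_ineq1_le x). lra. Qed.

Lemma KK_pos d' : 0 < d' -> 0 < KK d'.
Proof. intros H. unfold KK, Lmax. destruct qq_bd. apply Rdiv_lt_0_compat. pose proof L1_nonneg. lra. nra. Qed.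

Lemma WW_ge y : Mx <= WW y.
Proof.
  unfold WW. assert (1 <= exp (KK d * Rabs y)).
  { apply exp_ge1. apply Rmult_le_pos. apply Rlt_le, KK_pos; lra. apply Rabs_pos. }
  nra.
Qed.

Lemma pic_step n : forall y, Rabs (pic (S n) y - pic n y) <= qq ^ n * WW y.
Proof.
  induction n as [|n IH]; intros y.
  - simpl. rewrite Rmult_1_l. assert (Hc1 : forall t, continuous (fun _ : R => 1) t) by (intros; apply continuous_const). destruct (Top_bd (fun _ : R => 1) y Hc1) as [A B].
    pose proof (WW_ge y). apply (proj2 (Rabs_le_between _ _)). split; lra.
  - change (pic (S (S n)) y) with (Top (pic (S n)) y). change (pic (S n) y) with (Top (pic n) y).
    destruct qq_bd.
    assert (Hqn : 0 <= qq ^ n) by (apply pow_le; lra).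
    eapply Rle_trans. apply (contraction d (pic (S n)) (pic n) (qq ^ n * Mx) y).
    + lra.
    + apply pic_cont.
    + apply pic_cont.
    + apply pic_near.
    + apply pic_near.
    + apply Rmult_le_pos; lra.
    + intros t _. eapply Rle_trans. apply IH. right. unfold WW. ring.
    + right. unfold WW. simpl. ring.
Qed.

Lemma trunc_exists : exists U : R -> R, (forall t, continuous U t) /\ (forall y, U y = Top U y) /\
  (forall t, Rabs t <= d -> Rabs (U t - 1) <= e).
Proof.
  destruct qq_bd as [Hqq Hqq0].
  assert (HW : forall y, 0 <= WW y) by (intros y; pose proof (WW_ge y); lra).
  destruct (picard_limit pic qq WW ltac:(lra) HW pic_step) as [U [HUl HUb]].
  assert (Hq1 : 0 < 1 - qq) by lra.
  assert (Hnear : forall t, Rabs t <= d -> Rabs (U t - 1) <= e).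
  { intros t Ht. apply (geom_le _ e (WW t / (1 - qq)) qq). lra. apply Rdiv_le_0_compat; [apply HW|lra].
    intros n. replace (U t - 1) with ((U t - pic n t) + (pic n t - 1)) by ring.
    eapply Rle_trans. apply Rabs_triang. assert (A1 := HUb n t). assert (A2 := pic_near n t Ht).
    replace (WW t / (1 - qq) * qq ^ n) with (qq ^ n * WW t / (1 - qq)) by (field; lra). lra. }
  assert (Hcont : forall t, continuous U t).
  { intros y0. apply ed_cont. intros eps.
    set (W0 := Mx * exp (KK d * (Rabs y0 + 1))).
    assert (HW0 : 0 < W0) by (unfold W0; apply Rmult_lt_0_compat; [lra|apply exp_pos]).
    assert (Hp : 0 < eps / 3 * (1 - qq) / W0) by (apply Rdiv_lt_0_compat; [apply Rmult_lt_0_compat; [generalize (cond_pos eps); lra|lra]|lra]).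
    assert (Hq' : Rabs qq < 1) by (rewrite Rabs_right; lra).
    destruct (pow_lt_1_zero qq Hq' _ Hp) as [N HN]. specialize (HN N (le_n N)).
    rewrite Rabs_right in HN by (apply Rle_ge, pow_le; lra).
    assert (He3 : 0 < eps / 3) by (generalize (cond_pos eps); lra).
    destruct (cont_ed _ _ (pic_cont N y0) (mkposreal _ He3)) as [d1 Hd1]. simpl in Hd1.
    assert (Hd1p : 0 < Rmin d1 1) by (apply Rmin_pos; [apply cond_pos|lra]).
    exists (mkposreal _ Hd1p). simpl. intros y Hy.
    assert (Hy1 : Rabs (y - y0) < d1) by (eapply Rlt_le_trans; [exact Hy| apply Rmin_l]).
    assert (Hy2 : Rabs (y - y0) < 1) by (eapply Rlt_le_trans; [exact Hy| apply Rmin_r]).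
    assert (HWy : forall z, Rabs (z - y0) < 1 -> WW z <= W0).
    { intros z Hz. unfold WW, W0. apply Rmult_le_compat_l. lra. apply exp_mono.
      apply Rmult_le_compat_l. apply Rlt_le, KK_pos; lra.
      pose proof (Rabs_triang_inv z y0). lra. }
    assert (Hbound : forall z, Rabs (z - y0) < 1 -> Rabs (U z - pic N z) < eps / 3).
    { intros z Hz. eapply Rle_lt_trans. apply HUb.
      apply Rle_lt_trans with (qq ^ N * W0 / (1 - qq)).
      - unfold Rdiv. apply Rmult_le_compat_r. apply Rlt_le, Rinv_0_lt_compat; lra.
        apply Rmult_le_compat_l. apply pow_le; lra. apply HWy; auto.
      - apply Rmult_lt_reg_r with ((1 - qq) / W0). apply Rdiv_lt_0_compat; lra.
        replace (qq ^ N * W0 / (1 - qq) * ((1 - qq) / W0)) with (qq ^ N) by (field; lra).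
        replace (eps / 3 * ((1 - qq) / W0)) with (eps / 3 * (1 - qq) / W0) by (field; lra). exact HN. }
    replace (U y - U y0) with ((U y - pic N y) + (pic N y - pic N y0) - (U y0 - pic N y0)) by ring.
    eapply Rle_lt_trans. apply Rabs_triang. rewrite Rabs_Ropp.
    eapply Rle_lt_trans. apply Rplus_le_compat_r. apply Rabs_triang.
    assert (Hz0 : Rabs (y0 - y0) < 1) by (replace (y0 - y0) with 0 by ring; rewrite Rabs_R0; lra).
    assert (B1 := Hbound y Hy2). assert (B2 := Hbound y0 Hz0). specialize (Hd1 y Hy1).
    lra. }
  exists U. split; [exact Hcont|]. split; [|exact Hnear].
  - intros y.
    assert (Hle : Rabs (U y - Top U y) <= 0).
    { apply (geom_le _ 0 (2 * qq * WW y / (1 - qq)) qq). lra.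
      apply Rdiv_le_0_compat; [|lra]. apply Rmult_le_pos; [lra|apply HW].
      intros n.
      replace (U y - Top U y) with ((U y - pic (S n) y) + (Top (pic n) y - Top U y)) by (simpl; ring).
      eapply Rle_trans. apply Rabs_triang.
      assert (H1 := HUb (S n) y).
      assert (H2 : Rabs (Top (pic n) y - Top U y) <= qq * (qq ^ n * Mx / (1 - qq)) * exp (KK d * Rabs y)).
      { apply contraction. lra. apply pic_cont. exact Hcont. apply pic_near. exact Hnear.
        apply Rdiv_le_0_compat; [apply Rmult_le_pos; [apply pow_le; lra|lra]|lra].
        intros t _. rewrite Rabs_minus_sym. eapply Rle_trans. apply HUb. right. unfold WW. field. lra. }
      unfold WW in *. change (qq ^ S n) with (qq * qq ^ n) in H1.
      assert (E : 0 + 2 * qq * (Mx * exp (KK d * Rabs y)) / (1 - qq) * qq ^ n =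
                  qq * (qq ^ n) * (Mx * exp (KK d * Rabs y)) / (1 - qq) + qq * (qq ^ n * Mx / (1 - qq)) * exp (KK d * Rabs y)) by (field; lra).
      rewrite E. lra. }
    pose proof (Rabs_pos (U y - Top U y)). assert (Rabs (U y - Top U y) = 0) by lra.
    apply Rabs_eq_0 in H0. lra.
Qed.

Lemma true_to_top v : (forall t, continuous v t) -> (forall t, 0 < v t) ->
  (forall y, Rabs y <= Y -> v y = avg (fun t => phi t (/ v t)) y) ->
  forall y, Rabs y <= Y -> (m <= v y <= Mx) /\ v y = Top v y.
Proof.
  intros Hv Hp Heq.
  assert (Hc := true_integrand_cont v Hv Hp).
  assert (Hlo : forall y, Rabs y <= Y -> m <= v y).
  { intros y Hy. rewrite Heq by exact Hy. apply avg_ge. exact Hc.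
    intros s Hs. apply Hlow. eapply Rle_trans. apply abs_scale; auto. exact Hy.
    apply Rlt_le, Rinv_0_lt_compat, Hp. }
  assert (Hhi : forall y, Rabs y <= Y -> v y <= Mx).
  { intros y Hy. rewrite Heq by exact Hy. apply avg_le. exact Hc.
    intros s Hs. assert (Hsy : Rabs (s * y) <= Y) by (eapply Rle_trans; [apply abs_scale; auto| exact Hy]).
    apply Hup. exact Hsy. split. apply Rlt_le, Rinv_0_lt_compat, Hp.
    apply Rinv_le_contravar. lra. apply Hlo. exact Hsy. }
  intros y Hy. split. split; auto.
  rewrite Heq by exact Hy. unfold Top. apply avg_ext. intros s Hs.
  assert (Hsy : Rabs (s * y) <= Y) by (eapply Rle_trans; [apply abs_scale; auto| exact Hy]).
  unfold Phi. rewrite cy_id by exact Hsy. rewrite cl_id. reflexivity. split; auto.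
Qed.

Lemma trunc_uniq U v : (forall t, continuous U t) -> (forall y, U y = Top U y) ->
  (forall t, Rabs t <= d -> Rabs (U t - 1) <= e) ->
  (forall t, continuous v t) -> (forall y, Rabs y <= Y -> v y = Top v y) -> v 0 = 1 ->
  forall y, Rabs y <= Y -> v y = U y.
Proof.
  intros HUc HUf HUn Hv Hvf Hv0.
  destruct qq_bd as [Hqq Hqq0].
  assert (Hbd : forall y, Rabs y <= Y -> Rabs (v y - U y) <= Mx).
  { intros y Hy. rewrite Hvf by exact Hy. rewrite HUf.
    destruct (Top_bd v y Hv). destruct (Top_bd U y HUc). apply Rabs_le_between. lra. }
  destruct (cont_ed _ _ (Hv 0) (mkposreal _ (proj1 He))) as [d1 Hd1]. simpl in Hd1. rewrite Hv0 in Hd1.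
  set (d' := Rmin d (d1 / 2)).
  assert (Hd' : 0 < d' <= d).
  { split. apply Rmin_pos. lra. generalize (cond_pos d1); lra. apply Rmin_l. }
  assert (Hd'1 : d' < d1) by (assert (d' <= d1/2) by apply Rmin_r; generalize (cond_pos d1); lra).
  assert (Hvn : forall t, Rabs t <= d' -> Rabs (v t - 1) <= e).
  { intros t Ht. left. apply Hd1. rewrite Rminus_0_r. lra. }
  assert (HUn' : forall t, Rabs t <= d' -> Rabs (U t - 1) <= e) by (intros; apply HUn; lra).
  assert (Hind : forall n y, Rabs y <= Y -> Rabs (v y - U y) <= qq ^ n * Mx * exp (KK d' * Rabs y)).
  { induction n as [|n IH]; intros y Hy.
    - simpl. rewrite Rmult_1_l.
      assert (1 <= exp (KK d' * Rabs y)).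
      { apply exp_ge1. apply Rmult_le_pos. apply Rlt_le, KK_pos; lra. apply Rabs_pos. }
      specialize (Hbd y Hy). nra.
    - rewrite Hvf by exact Hy. rewrite HUf.
      eapply Rle_trans. apply (contraction d' v U (qq ^ n * Mx) y Hd' Hv HUc Hvn HUn').
      apply Rmult_le_pos. apply pow_le; lra. lra.
      intros t Ht. apply IH. lra.
      right. simpl. ring. }
  intros y Hy.
  assert (Hle : Rabs (v y - U y) <= 0).
  { apply (geom_le _ 0 (Mx * exp (KK d' * Rabs y)) qq). lra.
    apply Rmult_le_pos. lra. apply Rlt_le, exp_pos.
    intros n. rewrite Rplus_0_l. apply Rle_trans with (qq ^ n * Mx * exp (KK d' * Rabs y)). apply Hind. exact Hy. right. ring. }
  pose proof (Rabs_pos (v y - U y)). assert (Rabs (v y - U y) = 0) by lra.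
  apply Rabs_eq_0 in H0. lra.
Qed.

Lemma trunc_main : exists U : R -> R, (forall t, continuous U t) /\ (forall t, 0 < U t) /\
  (forall y, Rabs y <= Y -> U y = avg (fun t => phi t (/ U t)) y) /\
  (forall v, (forall t, continuous v t) -> (forall t, 0 < v t) ->
     (forall y, Rabs y <= Y -> v y = avg (fun t => phi t (/ v t)) y) ->
     forall y, Rabs y <= Y -> v y = U y).
Proof.
  destruct trunc_exists as [U [HUc [HUf HUn]]].
  assert (HUb : forall t, m <= U t <= Mx) by (intros t; rewrite HUf; apply Top_bd; exact HUc).
  assert (HUp : forall t, 0 < U t) by (intros t; specialize (HUb t); lra).
  assert (HUe : forall y, Rabs y <= Y -> U y = avg (fun t => phi t (/ U t)) y).
  { intros y Hy. rewrite HUf. unfold Top. apply avg_ext. intros s Hs.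
    assert (Hsy : Rabs (s * y) <= Y) by (eapply Rle_trans; [apply abs_scale; auto| exact Hy]).
    unfold Phi. rewrite cy_id by exact Hsy. rewrite cl_id by apply HUb. reflexivity. }
  exists U. split; [exact HUc|]. split; [exact HUp|]. split; [exact HUe|].
  intros v Hv Hvp Hve.
  assert (Hv0 : v 0 = 1).
  { apply at0. apply Hvp. rewrite Hve at 1. apply avg_0. rewrite Rabs_R0; lra. }
  apply (trunc_uniq U v HUc HUf HUn Hv). intros y Hy. apply (true_to_top v Hv Hvp Hve y Hy). exact Hv0.
Qed.

End Trunc.

Lemma Y_main Y : 1 <= Y -> exists U : R -> R, (forall t, continuous U t) /\ (forall t, 0 < U t) /\
  (forall y, Rabs y <= Y -> U y = avg (fun t => phi t (/ U t)) y) /\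
  (forall v, (forall t, continuous v t) -> (forall t, 0 < v t) ->
     (forall y, Rabs y <= Y -> v y = avg (fun t => phi t (/ v t)) y) ->
     forall y, Rabs y <= Y -> v y = U y).
Proof.
  intros HY. destruct (bounds_Y Y ltac:(lra)) as [m [Mx [Hm [HMx [Hlo Hhi]]]]].
  destruct near01 as [q0 [e [d [Hq0 [He [Hd [HN1 HN2]]]]]]].
  exact (trunc_main Y m Mx q0 e d HY Hm HMx Hlo Hhi Hq0 He Hd HN1 HN2).
Qed.

Definition TS (Y : R) (U : R -> R) : Prop := (forall t, continuous U t) /\ (forall t, 0 < U t) /\
  (forall y, Rabs y <= Y -> U y = avg (fun t => phi t (/ U t)) y) /\
  (forall v, (forall t, continuous v t) -> (forall t, 0 < v t) ->
     (forall y, Rabs y <= Y -> v y = avg (fun t => phi t (/ v t)) y) ->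
     forall y, Rabs y <= Y -> v y = U y).

Definition Gsol (v : R -> R) : Prop := (forall t, continuous v t) /\ (forall t, 0 < v t) /\
  (forall y, v y = avg (fun t => phi t (/ v t)) y).

Lemma G_exists_unique : exists G, Gsol G /\ forall v, Gsol v -> forall y, v y = G y.
Proof.
  assert (Hex : forall Y, exists U, 1 <= Y -> TS Y U).
  { intros Y. destruct (Rle_dec 1 Y) as [HY|HY].
    - destruct (Y_main Y HY) as [U HU]. exists U. intros _. exact HU.
    - exists (fun _ => 0). intros H. lra. }
  set (Uf := fun Y => proj1_sig (constructive_indefinite_description _ (Hex Y))).
  assert (HUf : forall Y, 1 <= Y -> TS Y (Uf Y)).
  { intros Y HY. unfold Uf. destruct (constructive_indefinite_description _ (Hex Y)) as [U HU]. simpl. auto. }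
  set (G := fun y => Uf (Rabs y + 1) y).
  assert (Hcons : forall Y1 Y2, 1 <= Y1 <= Y2 -> forall y, Rabs y <= Y1 -> Uf Y1 y = Uf Y2 y).
  { intros Y1 Y2 H12 y Hy. destruct (HUf Y1 ltac:(lra)) as [_ [_ [_ Hu1]]].
    destruct (HUf Y2 ltac:(lra)) as [Hcc2 [Hp2 [He2 _]]].
    symmetry. apply Hu1; auto. intros z Hz. apply He2. lra. }
  assert (HG : forall Y, 1 <= Y -> forall y, Rabs y <= Y -> G y = Uf Y y).
  { intros Y HY y Hy. unfold G. pose proof (Rabs_pos y).
    destruct (Rle_dec Y (Rabs y + 1)) as [Hl|Hl].
    - symmetry. apply Hcons; [split; lra | lra].
    - apply Hcons; [split; lra | lra]. }
  assert (HGs : Gsol G).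
  { split; [|split].
    - intros y. set (Y := Rabs y + 1). pose proof (Rabs_pos y).
      destruct (HUf Y ltac:(unfold Y; lra)) as [Hc _].
      apply continuous_ext_loc with (g := Uf Y).
      + exists (mkposreal 1 Rlt_0_1). intros z Hz. pose proof (proj1 (ball_R _ _ _) Hz) as Hz1. simpl in Hz1.
        symmetry. apply HG. unfold Y; lra. pose proof (Rabs_triang_inv z y). unfold Y. lra.
      + apply Hc.
    - intros t. unfold G. pose proof (Rabs_pos t). destruct (HUf (Rabs t + 1) ltac:(lra)) as [_ [Hp _]]. apply Hp.
    - intros y. set (Y := Rabs y + 1). pose proof (Rabs_pos y).
      destruct (HUf Y ltac:(unfold Y; lra)) as [_ [_ [He _]]].
      rewrite (HG Y) by (unfold Y; lra). rewrite He by (unfold Y; lra).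
      apply avg_ext. intros s Hs. rewrite (HG Y). reflexivity. unfold Y; lra.
      eapply Rle_trans. apply abs_scale; auto. unfold Y; lra. }
  exists G. split; [exact HGs|].
  intros v [Hvc [Hvp Hve]] y. set (Y := Rabs y + 1). pose proof (Rabs_pos y).
  destruct (HUf Y ltac:(unfold Y; lra)) as [_ [_ [_ Hu]]].
  rewrite (HG Y) by (unfold Y; lra). apply Hu; auto. unfold Y; lra.
Qed.

Lemma exdiff2 u v : ex_diff_n phi 2 u v.
Proof.
  destruct Hc2 as [Hp [Hpy [Hpz Hc]]].
  destruct (Hc u v) as [C0 [C1 [C2 [C3 [C4 [C5 C6]]]]]].
  destruct (Hp u v) as [P1 P2]. destruct (Hpy u v) as [Q1 Q2]. destruct (Hpz u v) as [S1 S2].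
  simpl. repeat split; auto.
Qed.

Lemma exdiff1_y u v : ex_diff_n (pd_y phi) 1 u v.
Proof. destruct (exdiff2 u v) as [_ [_ [_ [H _]]]]. exact H. Qed.
Lemma exdiff1_z u v : ex_diff_n (pd_z phi) 1 u v.
Proof. destruct (exdiff2 u v) as [_ [_ [_ [_ H]]]]. exact H. Qed.

Lemma DL1_eq f x y dx dy : DL_pol 1 f x y dx dy = f x y + pd_y f x y * dx + pd_z f x y * dy.
Proof. unfold DL_pol, differential, partial_derive, pd_y, pd_z. simpl. unfold Binomial.C. simpl. field. Qed.
Lemma DL0_eq f x y dx dy : DL_pol 0 f x y dx dy = f x y.
Proof. unfold DL_pol, differential, partial_derive. simpl. unfold Binomial.C. simpl. field. Qed.

Lemma taylor1 x y : exists D rho, 0 < rho /\ 0 <= D /\ forall u v, Rabs (u - x) < rho -> Rabs (v - y) < rho ->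
  Rabs (phi u v - (phi x y + pd_y phi x y * (u - x) + pd_z phi x y * (v - y))) <= D * Rmax (Rabs (u - x)) (Rabs (v - y)) ^ 2.
Proof.
  destruct (Taylor_Lagrange_2d phi 1 x y) as [D [rho HD]].
  { exists (mkposreal 1 Rlt_0_1). intros; apply exdiff2. }
  exists (Rabs D), rho. split. apply cond_pos. split. apply Rabs_pos.
  intros u v Hu Hv. specialize (HD u v Hu Hv). rewrite DL1_eq in HD.
  eapply Rle_trans. exact HD. apply Rmult_le_compat_r. apply pow_le. 
  apply Rle_trans with (Rabs (u - x)). apply Rabs_pos. apply Rmax_l. apply Rle_abs.
Qed.

Lemma taylor0 (f : R -> R -> R) x y : (forall u v, ex_diff_n f 1 u v) -> exists D rho, 0 < rho /\ 0 <= D /\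
  forall u v, Rabs (u - x) < rho -> Rabs (v - y) < rho ->
  Rabs (f u v - f x y) <= D * Rmax (Rabs (u - x)) (Rabs (v - y)).
Proof.
  intros Hf. destruct (Taylor_Lagrange_2d f 0 x y) as [D [rho HD]].
  { exists (mkposreal 1 Rlt_0_1). intros; apply Hf. }
  exists (Rabs D), rho. split. apply cond_pos. split. apply Rabs_pos.
  intros u v Hu Hv. specialize (HD u v Hu Hv). rewrite DL0_eq in HD. rewrite pow_1 in HD.
  eapply Rle_trans. exact HD. apply Rmult_le_compat_r.
  apply Rle_trans with (Rabs (u - x)). apply Rabs_pos. apply Rmax_l. apply Rle_abs.
Qed.

Lemma phi_diff x y : differentiable_pt_lim phi x y (pd_y phi x y) (pd_z phi x y).
Proof.
  destruct (taylor1 x y) as [D [rho [Hr [HD H]]]].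
  intros eps. 
  assert (Hp : 0 < Rmin rho (eps / (D + 1))) by (apply Rmin_pos; [lra| apply Rdiv_lt_0_compat; [apply cond_pos|lra]]).
  exists (mkposreal _ Hp). simpl. intros u v Hu Hv.
  assert (Hu1 : Rabs (u - x) < rho) by (eapply Rlt_le_trans; [exact Hu| apply Rmin_l]).
  assert (Hv1 : Rabs (v - y) < rho) by (eapply Rlt_le_trans; [exact Hv| apply Rmin_l]).
  assert (Hu2 : Rabs (u - x) < eps / (D + 1)) by (eapply Rlt_le_trans; [exact Hu| apply Rmin_r]).
  assert (Hv2 : Rabs (v - y) < eps / (D + 1)) by (eapply Rlt_le_trans; [exact Hv| apply Rmin_r]).
  specialize (H u v Hu1 Hv1).
  set (mx := Rmax (Rabs (u - x)) (Rabs (v - y))) in *.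
  assert (Hmx0 : 0 <= mx) by (apply Rle_trans with (Rabs (u - x)); [apply Rabs_pos| apply Rmax_l]).
  assert (Hmx : mx <= eps / (D + 1)) by (unfold mx, Rmax; destruct Rle_dec; lra).
  replace (phi u v - phi x y - (pd_y phi x y * (u - x) + pd_z phi x y * (v - y)))
    with (phi u v - (phi x y + pd_y phi x y * (u - x) + pd_z phi x y * (v - y))) by ring.
  eapply Rle_trans. exact H. simpl. rewrite Rmult_1_r.
  assert (D * mx <= eps).
  { apply Rle_trans with ((D + 1) * mx). nra.
    apply Rmult_le_reg_r with (/ (D + 1)). apply Rinv_0_lt_compat; lra.
    replace ((D + 1) * mx * / (D + 1)) with mx by (field; lra). exact Hmx. }
  replace (D * (mx * mx)) with ((D * mx) * mx) by ring. 
  apply Rmult_le_compat_r; lra.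
Qed.

Section Reg.
Variable G : R -> R.
Hypothesis HGc : forall t, continuous G t.
Hypothesis HGp : forall t, 0 < G t.
Hypothesis HGe : forall y, G y = avg (fun t => phi t (/ G t)) y.

Definition F t := phi t (/ G t).
Definition gg y := y * G y.
Definition p0 := pd_z phi 0 1.
Definition AA := pd_y phi 0 1.
Definition aa := AA / (2 + p0).

Lemma p0_bd : 0 <= p0 < 1.
Proof. unfold p0. split. apply Hinf; lra. apply Hd01. Qed.

Lemma F_cont t : continuous F t.
Proof. apply true_integrand_cont; auto. Qed.

Lemma G_avg y : G y = avg F y.
Proof. apply HGe. Qed.

Lemma G0 : G 0 = 1.
Proof. apply at0. apply HGp. rewrite G_avg at 1. rewrite avg_0. reflexivity. Qed.

Lemma gg_rint y : gg y = RInt F 0 y.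
Proof. unfold gg. rewrite G_avg. apply avg_rint. apply F_cont. Qed.

Lemma gg_deriv y : is_derive gg y (F y).
Proof.
  apply is_derive_ext with (f := fun z => RInt F 0 z). intros t. symmetry. apply gg_rint.
  apply RInt_cont_derive. apply F_cont.
Qed.

Lemma avg_sub1 y : G y - 1 = avg (fun t => F t - 1) y.
Proof. rewrite G_avg. rewrite avg_minus, avg_const. reflexivity. apply F_cont. intros; apply continuous_const. Qed.

Lemma R1 : exists c1 d1, 0 < d1 <= 1 /\ 0 <= c1 /\ c1 * d1 <= 1/2 /\
  forall y, Rabs y <= d1 -> Rabs (G y - 1) <= c1 * Rabs y.
Proof.
  destruct near01 as [q0 [e [d [Hq0 [He [Hd [HN1 HN2]]]]]]].
  destruct (taylor1 0 1) as [D [rho [Hr [HD HT]]]].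
  destruct (cont_ed _ _ (HGc 0) (mkposreal _ (proj1 He))) as [dG HdG]. simpl in HdG. rewrite G0 in HdG.
  set (d1 := Rmin d (Rmin (dG / 2) (Rmin (rho / 2) 1))).
  assert (Hd1 : 0 < d1 <= 1 /\ d1 <= d /\ d1 < dG /\ d1 < rho).
  { pose proof (cond_pos dG). unfold d1. 
    assert (0 < Rmin (rho/2) 1) by (apply Rmin_pos; lra).
    assert (0 < Rmin (dG / 2) (Rmin (rho / 2) 1)) by (apply Rmin_pos; lra).
    assert (0 < Rmin d (Rmin (dG / 2) (Rmin (rho / 2) 1))) by (apply Rmin_pos; lra).
    assert (Rmin d (Rmin (dG / 2) (Rmin (rho / 2) 1)) <= d) by apply Rmin_l.
    assert (Rmin d (Rmin (dG / 2) (Rmin (rho / 2) 1)) <= Rmin (dG / 2) (Rmin (rho / 2) 1)) by apply Rmin_r.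
    assert (Rmin (dG / 2) (Rmin (rho / 2) 1) <= dG / 2) by apply Rmin_l.
    assert (Rmin (dG / 2) (Rmin (rho / 2) 1) <= Rmin (rho / 2) 1) by apply Rmin_r.
    assert (Rmin (rho / 2) 1 <= rho / 2) by apply Rmin_l.
    assert (Rmin (rho / 2) 1 <= 1) by apply Rmin_r.
    repeat split; lra. }
  destruct Hd1 as [[Hd1a Hd1b] [Hd1d [Hd1G Hd1r]]].
  set (c := Rabs AA + D).
  assert (Hc : 0 <= c) by (unfold c; pose proof (Rabs_pos AA); lra).
  assert (Hphi1 : forall t, Rabs t <= d1 -> Rabs (phi t 1 - 1) <= c * Rabs t).
  { intros t Ht. assert (Ht' : Rabs (t - 0) < rho) by (rewrite Rminus_0_r; lra).
    assert (H1' : Rabs (1 - 1) < rho) by (replace (1 - 1) with 0 by ring; rewrite Rabs_R0; lra).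
    specialize (HT t 1 Ht' H1'). rewrite H01 in HT. 
    replace (1 - 1) with 0 in HT by ring. rewrite Rabs_R0, Rminus_0_r in HT.
    rewrite Rmax_left in HT by apply Rabs_pos.
    replace (phi t 1 - (1 + pd_y phi 0 1 * t + pd_z phi 0 1 * 0)) with ((phi t 1 - 1) - AA * t) in HT by (unfold AA; ring).
    assert (Rabs (phi t 1 - 1) <= Rabs (AA * t) + D * Rabs t ^ 2).
    { replace (phi t 1 - 1) with ((phi t 1 - 1 - AA * t) + AA * t) by ring.
      eapply Rle_trans. apply Rabs_triang. rewrite Rplus_comm. apply Rplus_le_compat_l. exact HT. }
    rewrite Rabs_mult in H. unfold c. simpl in H. rewrite Rmult_1_r in H.
    pose proof (Rabs_pos t). assert (Rabs t * Rabs t <= Rabs t) by (rewrite <- (Rmult_1_r (Rabs t)) at 3; apply Rmult_le_compat_l; lra). assert (D * (Rabs t * Rabs t) <= D * Rabs t) by (apply Rmult_le_compat_l; lra). rewrite Rmult_plus_distr_r. lra. }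
  assert (HGn : forall t, Rabs t <= d1 -> Rabs (G t - 1) <= e).
  { intros t Ht. left. apply HdG. rewrite Rminus_0_r. lra. }
  assert (Hboot := bootstrap (fun y => G y - 1) c q0 d1 e 1 Hq0 Hc (Rlt_le _ _ (proj1 He)) HGn).
  assert (Hres : forall y, Rabs y <= d1 -> Rabs (G y - 1) <= c / (1 - q0) * Rabs y ^ 1).
  { apply Hboot. intros y Hy B E HB HE Hbnd.
    rewrite avg_sub1. apply avg_bound_const.
    - intros t. apply (continuous_minus F (fun _ => 1)). apply F_cont. apply continuous_const.
    - intros s Hs. set (t := s * y).
      assert (Hty : Rabs t <= Rabs y) by (apply abs_scale; auto).
      assert (Ht : Rabs t <= d1) by lra.
      unfold F. replace (phi t (/ G t) - 1) with ((phi t (/ G t) - phi t (/ 1)) + (phi t 1 - 1)) by (rewrite Rinv_1; ring).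
      eapply Rle_trans. apply Rabs_triang.
      assert (A1 : Rabs (phi t (/ G t) - phi t (/ 1)) <= q0 * Rabs (G t - 1)).
      { apply HN1. lra. apply HGn; auto. replace (1 - 1) with 0 by ring. rewrite Rabs_R0. lra. }
      assert (A2 := Hphi1 t Ht). assert (A3 := Hbnd t Hty).
      rewrite pow_1 in *.
      assert (q0 * Rabs (G t - 1) <= q0 * (B * Rabs t + E)) by (apply Rmult_le_compat_l; lra).
      assert (c * Rabs t <= c * Rabs y) by (apply Rmult_le_compat_l; lra).
      assert (q0 * B * Rabs t <= q0 * B * Rabs y) by (apply Rmult_le_compat_l; [apply Rmult_le_pos|]; lra).
      nra. }
  set (c1 := c / (1 - q0)).
  assert (Hc1 : 0 <= c1) by (unfold c1; apply Rdiv_le_0_compat; lra).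
  set (d2 := Rmin d1 (1 / (2 * (c1 + 1)))).
  assert (Hd2 : 0 < d2 <= d1).
  { split. apply Rmin_pos. lra. apply Rdiv_lt_0_compat; lra. apply Rmin_l. }
  exists c1, d2. split. lra. split. exact Hc1. split.
  - assert (d2 <= 1 / (2 * (c1 + 1))) by apply Rmin_r.
    apply Rle_trans with (c1 * (1 / (2 * (c1 + 1)))). apply Rmult_le_compat_l; lra.
    apply Rmult_le_reg_r with (2 * (c1 + 1)). lra.
    replace (c1 * (1 / (2 * (c1 + 1))) * (2 * (c1 + 1))) with c1 by (field; lra). lra.
  - intros y Hy. rewrite <- (pow_1 (Rabs y)). apply Hres. lra.
Qed.


Lemma avg_lin c y : avg (fun t => c * t) y = c * y / 2.
Proof.
  unfold avg.
  assert (H : is_RInt (fun s => c * (s * y)) 0 1 (minus (c * y * 1 ^ 2 / 2) (c * y * 0 ^ 2 / 2))).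
  { apply (is_RInt_derive (V := R_CompleteNormedModule) (fun s => c * y * s ^ 2 / 2)).
    - intros x _. auto_derive. auto. match goal with |- ?l = ?r => change (@eq R l r) end. field.
    - intros x _. apply (continuous_mult (fun _ => c) (fun s => s * y)). apply continuous_const. apply cont_mul_lin. }
  rewrite (is_RInt_unique _ _ _ _ H). unfold minus, plus, opp; simpl. field.
Qed.

Definition ww t := G t - 1 - aa * t.

Lemma aa_eq : AA - p0 * aa - 2 * aa = 0.
Proof. unfold aa. pose proof p0_bd. field. lra. Qed.

Lemma w_avg y : ww y = avg (fun t => (F t - 1) - (2 * aa) * t) y.
Proof.
  rewrite avg_minus. rewrite <- avg_sub1, avg_lin. unfold ww. field.
  intros t. apply (continuous_minus F (fun _ => 1)). apply F_cont. apply continuous_const.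
  intros t. apply (continuous_mult (fun _ => 2 * aa) (fun s => s)). apply continuous_const. apply continuous_id.
Qed.

Lemma integrand_bound : exists c1 C2 d2, 0 < d2 <= 1 /\ 0 <= c1 /\ 0 <= C2 /\ c1 * d2 <= 1/2 /\
  (forall y, Rabs y <= d2 -> Rabs (G y - 1) <= c1 * Rabs y) /\
  (forall t, Rabs t <= d2 -> Rabs ((F t - 1) - (2 * aa) * t) <= p0 * Rabs (ww t) + C2 * Rabs t ^ 2).
Proof.
  destruct R1 as [c1 [d1 [Hd1 [Hc1 [Hcd HR1]]]]].
  destruct (taylor1 0 1) as [D [rho [Hr [HD HT]]]].
  set (d2 := Rmin d1 (rho / (2 * (1 + 2 * c1)))).
  assert (Hd2 : 0 < d2 <= d1).
  { split. apply Rmin_pos. lra. apply Rdiv_lt_0_compat; lra. apply Rmin_l. }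
  assert (Hd2r : (1 + 2 * c1) * d2 < rho).
  { assert (d2 <= rho / (2 * (1 + 2 * c1))) by apply Rmin_r.
    apply Rle_lt_trans with ((1 + 2 * c1) * (rho / (2 * (1 + 2 * c1)))).
    apply Rmult_le_compat_l; lra. replace ((1 + 2 * c1) * (rho / (2 * (1 + 2 * c1)))) with (rho / 2) by (field; lra). lra. }
  pose proof p0_bd as Hp0.
  exists c1, (2 * p0 * c1 ^ 2 + D * (1 + 2 * c1) ^ 2), d2.
  split. lra. split. exact Hc1. split. 
  { assert (0 <= 2 * p0 * c1 ^ 2) by (apply Rmult_le_pos; [lra| apply pow_le; lra]).
    assert (0 <= D * (1 + 2 * c1) ^ 2) by (apply Rmult_le_pos; [lra| apply pow_le; lra]). lra. }
  split. { apply Rle_trans with (c1 * d1). apply Rmult_le_compat_l; lra. exact Hcd. }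
  split. { intros y Hy. apply HR1. lra. }
  intros t Ht.
  assert (HG1 := HR1 t ltac:(lra)).
  pose proof (Rabs_pos t) as Ht0.
  assert (Hc1t : c1 * Rabs t <= 1/2) by (apply Rle_trans with (c1 * d1); [apply Rmult_le_compat_l; lra| exact Hcd]).
  assert (HGb : 1/2 <= G t <= 3/2) by (apply Rabs_le_between in HG1; lra).
  set (z := / G t).
  assert (Hz : Rabs (z - 1) <= 2 * c1 * Rabs t).
  { unfold z. replace (/ G t - 1) with ((1 - G t) / G t) by (field; lra).
    unfold Rdiv. rewrite Rabs_mult, Rabs_inv, (Rabs_right (G t)) by lra. rewrite Rabs_minus_sym.
    apply Rmult_le_reg_r with (G t). lra. rewrite Rmult_assoc, Rinv_l by lra.
    assert (0 <= c1 * Rabs t) by (apply Rmult_le_pos; lra). nra. }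
  assert (Hmax : Rmax (Rabs (t - 0)) (Rabs (z - 1)) <= (1 + 2 * c1) * Rabs t).
  { rewrite Rminus_0_r. apply Rmax_lub. nra. lra. }
  assert (Hmax0 : 0 <= Rmax (Rabs (t - 0)) (Rabs (z - 1))) by (apply Rle_trans with (Rabs (t - 0)); [apply Rabs_pos| apply Rmax_l]).
  assert (Htr : Rabs (t - 0) < rho) by (rewrite Rminus_0_r; nra).
  assert (Hzr : Rabs (z - 1) < rho) by nra.
  specialize (HT t z Htr Hzr). rewrite H01 in HT. fold AA p0 in HT. rewrite Rminus_0_r in HT, Hmax, Hmax0.
  set (Rm := phi t z - (1 + AA * t + p0 * (z - 1))) in *.
  assert (HR : Rabs Rm <= D * ((1 + 2 * c1) * Rabs t) ^ 2).
  { eapply Rle_trans. exact HT. apply Rmult_le_compat_l. lra. apply pow_incr. split; auto. }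
  assert (Eid : (F t - 1) - (2 * aa) * t = (AA - p0 * aa - 2 * aa) * t - p0 * ww t + p0 * ((G t - 1) ^ 2 / G t) + Rm).
  { unfold Rm, F, ww, z. fold z. unfold z. field. lra. }
  rewrite Eid, aa_eq.
  replace (0 * t - p0 * ww t + p0 * ((G t - 1) ^ 2 / G t) + Rm) with ((- p0 * ww t) + (p0 * ((G t - 1) ^ 2 / G t) + Rm)) by ring.
  eapply Rle_trans. apply Rabs_triang. 
  rewrite Rabs_mult, Rabs_Ropp, (Rabs_right p0) by lra.
  apply Rplus_le_compat_l.
  eapply Rle_trans. apply Rabs_triang.
  assert (HQ : Rabs (p0 * ((G t - 1) ^ 2 / G t)) <= 2 * p0 * c1 ^ 2 * Rabs t ^ 2).
  { rewrite Rabs_mult, (Rabs_right p0) by lra.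
    unfold Rdiv. rewrite Rabs_mult, Rabs_inv, (Rabs_right (G t)) by lra.
    rewrite <- RPow_abs.
    assert (Hinv : / G t <= 2) by (replace 2 with (/ (1/2)) by field; apply Rinv_le_contravar; lra).
    assert (Hsq : Rabs (G t - 1) ^ 2 <= (c1 * Rabs t) ^ 2) by (apply pow_incr; split; [apply Rabs_pos| exact HG1]).
    assert (0 <= / G t) by (apply Rlt_le, Rinv_0_lt_compat; lra).
    assert (0 <= Rabs (G t - 1) ^ 2) by (apply pow_le, Rabs_pos).
    assert (Rabs (G t - 1) ^ 2 * / G t <= (c1 * Rabs t) ^ 2 * 2) by (apply Rmult_le_compat; lra).
    replace (2 * p0 * c1 ^ 2 * Rabs t ^ 2) with (p0 * ((c1 * Rabs t) ^ 2 * 2)) by ring.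
    apply Rmult_le_compat_l; lra. }
  replace ((2 * p0 * c1 ^ 2 + D * (1 + 2 * c1) ^ 2) * Rabs t ^ 2) with (2 * p0 * c1 ^ 2 * Rabs t ^ 2 + D * ((1 + 2 * c1) * Rabs t) ^ 2) by ring.
  lra.
Qed.


Lemma R2 : exists c1 C2 Cw d2, 0 < d2 <= 1 /\ 0 <= c1 /\ 0 <= C2 /\ 0 <= Cw /\ c1 * d2 <= 1/2 /\
  (forall y, Rabs y <= d2 -> Rabs (G y - 1) <= c1 * Rabs y) /\
  (forall t, Rabs t <= d2 -> Rabs ((F t - 1) - (2 * aa) * t) <= p0 * Rabs (ww t) + C2 * Rabs t ^ 2) /\
  (forall y, Rabs y <= d2 -> Rabs (ww y) <= Cw * Rabs y ^ 2).
Proof.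
  destruct integrand_bound as [c1 [C2 [d2 [Hd2 [Hc1 [HC2 [Hcd [HG1 HI]]]]]]]].
  pose proof p0_bd as Hp0.
  set (E0 := (c1 + Rabs aa) * d2).
  assert (HE0 : 0 <= E0) by (unfold E0; pose proof (Rabs_pos aa); apply Rmult_le_pos; lra).
  assert (Hw0 : forall y, Rabs y <= d2 -> Rabs (ww y) <= E0).
  { intros y Hy. unfold ww, E0. replace (G y - 1 - aa * y) with ((G y - 1) + (- (aa * y))) by ring.
    eapply Rle_trans. apply Rabs_triang. rewrite Rabs_Ropp, Rabs_mult.
    assert (HG := HG1 y Hy). pose proof (Rabs_pos aa). pose proof (Rabs_pos y).
    assert (c1 * Rabs y <= c1 * d2) by (apply Rmult_le_compat_l; lra).
    assert (Rabs aa * Rabs y <= Rabs aa * d2) by (apply Rmult_le_compat_l; lra). lra. }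
  assert (Hb := bootstrap ww C2 p0 d2 E0 2 Hp0 HC2 HE0 Hw0).
  exists c1, C2, (C2 / (1 - p0)), d2. split; [exact Hd2|]. split; [exact Hc1|]. split; [exact HC2|].
  split. apply Rdiv_le_0_compat; lra. split; [exact Hcd|]. split; [exact HG1|]. split; [exact HI|].
  apply Hb. intros y Hy B E HB HE Hbnd.
  rewrite w_avg. apply avg_bound_const.
  - intros t. apply (continuous_minus (fun t => F t - 1) (fun t => 2 * aa * t)).
    apply (continuous_minus F (fun _ => 1)). apply F_cont. apply continuous_const.
    apply (continuous_mult (fun _ => 2 * aa) (fun s => s)). apply continuous_const. apply continuous_id.
  - intros s Hs. set (t := s * y).
    assert (Hty : Rabs t <= Rabs y) by (apply abs_scale; auto).
    eapply Rle_trans. apply HI. lra.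
    assert (A3 := Hbnd t Hty).
    assert (Hpt : Rabs t ^ 2 <= Rabs y ^ 2) by (apply pow_incr; split; [apply Rabs_pos| exact Hty]).
    assert (p0 * Rabs (ww t) <= p0 * (B * Rabs t ^ 2 + E)) by (apply Rmult_le_compat_l; lra).
    assert (C2 * Rabs t ^ 2 <= C2 * Rabs y ^ 2) by (apply Rmult_le_compat_l; lra).
    assert (p0 * B * Rabs t ^ 2 <= p0 * B * Rabs y ^ 2) by (apply Rmult_le_compat_l; [apply Rmult_le_pos|]; lra).
    lra.
Qed.

Definition DG y := if Req_EM_T y 0 then aa else (F y - G y) / y.

Lemma G_deriv_nz y : y <> 0 -> is_derive G y ((F y - G y) / y).
Proof.
  intros Hy. apply is_derive_ext_loc with (f := fun z => gg z / z).
  - generalize (locally_neq0 y Hy). apply filter_imp. intros z Hz. unfold gg. toR. field. exact Hz.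
  - replace ((F y - G y) / y) with ((F y * y - gg y * 1) / y ^ 2) by (unfold gg; field; exact Hy).
    apply is_derive_div. apply gg_deriv. apply (is_derive_id y). exact Hy.
Qed.


Lemma R3 : exists c1 C4 d2, 0 < d2 <= 1 /\ 0 <= c1 /\ 0 <= C4 /\ c1 * d2 <= 1/2 /\
  (forall y, Rabs y <= d2 -> Rabs (G y - 1) <= c1 * Rabs y) /\
  (forall y, Rabs y <= d2 -> Rabs (DG y - aa) <= C4 * Rabs y) /\
  is_derive G 0 aa.
Proof.
  destruct R2 as [c1 [C2 [Cw [d2 [Hd2 [Hc1 [HC2 [HCw [Hcd [HG1 [HI Hw]]]]]]]]]]].
  pose proof p0_bd as Hp0.
  exists c1, (p0 * Cw + C2 + Cw), d2. split; [exact Hd2|]. split; [exact Hc1|].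
  split. { assert (0 <= p0 * Cw) by (apply Rmult_le_pos; lra). lra. }
  split; [exact Hcd|]. split; [exact HG1|]. split.
  - intros y Hy. unfold DG. destruct (Req_EM_T y 0) as [H0|H0].
    + subst. replace (aa - aa) with 0 by ring. rewrite !Rabs_R0. lra.
    + replace ((F y - G y) / y - aa) with (((F y - 1 - 2 * aa * y) - ww y) / y) by (unfold ww; field; exact H0).
      unfold Rdiv. rewrite Rabs_mult, Rabs_inv.
      assert (Hy0 : 0 < Rabs y) by (apply Rabs_pos_lt; exact H0).
      apply Rmult_le_reg_r with (Rabs y). exact Hy0.
      rewrite Rmult_assoc, Rinv_l by lra.
      eapply Rle_trans. rewrite Rmult_1_r. apply Rabs_triang. rewrite Rabs_Ropp.
      assert (A1 := HI y Hy). assert (A2 := Hw y Hy).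
      assert (p0 * Rabs (ww y) <= p0 * (Cw * Rabs y ^ 2)) by (apply Rmult_le_compat_l; lra).
      simpl in *. nra.
  - apply is_derive_Reals. intros eps Heps.
    assert (Hp : 0 < Rmin d2 (eps / (Cw + 1))) by (apply Rmin_pos; [lra| apply Rdiv_lt_0_compat; lra]).
    exists (mkposreal _ Hp). simpl. intros h Hh0 Hh.
    assert (Hh1 : Rabs h < d2) by (eapply Rlt_le_trans; [exact Hh| apply Rmin_l]).
    assert (Hh2 : Rabs h < eps / (Cw + 1)) by (eapply Rlt_le_trans; [exact Hh| apply Rmin_r]).
    rewrite Rplus_0_l, G0.
    replace ((G h - 1) / h - aa) with (ww h / h) by (unfold ww; field; exact Hh0).
    unfold Rdiv. rewrite Rabs_mult, Rabs_inv.
    assert (Hy0 : 0 < Rabs h) by (apply Rabs_pos_lt; exact Hh0).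
    assert (A2 := Hw h ltac:(lra)). simpl in A2. rewrite Rmult_1_r in A2.
    apply Rle_lt_trans with (Cw * Rabs h).
    + apply Rmult_le_reg_r with (Rabs h). exact Hy0. rewrite Rmult_assoc, Rinv_l by lra. lra.
    + apply Rle_lt_trans with ((Cw + 1) * Rabs h). nra.
      apply Rmult_lt_reg_r with (/ (Cw + 1)). apply Rinv_0_lt_compat; lra.
      replace ((Cw + 1) * Rabs h * / (Cw + 1)) with (Rabs h) by (field; lra).
      replace (eps * / (Cw + 1)) with (eps / (Cw + 1)) by reflexivity. exact Hh2.
Qed.

Lemma G_deriv y : is_derive G y (DG y).
Proof.
  unfold DG. destruct (Req_EM_T y 0) as [H0|H0].
  - subst. destruct R3 as [_ [_ [_ [_ [_ [_ [_ [_ [_ H]]]]]]]]]. exact H.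
  - apply G_deriv_nz. exact H0.
Qed.

Lemma DG_cont y : continuous DG y.
Proof.
  destruct (Req_EM_T y 0) as [H0|H0].
  - subst. destruct R3 as [c1 [C4 [d2 [Hd2 [_ [HC4 [_ [_ [HD _]]]]]]]]].
    apply ed_cont. intros eps.
    assert (Hp : 0 < Rmin d2 (eps / (C4 + 1))) by (apply Rmin_pos; [lra| apply Rdiv_lt_0_compat; [apply cond_pos|lra]]).
    exists (mkposreal _ Hp). simpl. intros z Hz. rewrite Rminus_0_r in Hz.
    assert (Hz1 : Rabs z < d2) by (eapply Rlt_le_trans; [exact Hz| apply Rmin_l]).
    assert (Hz2 : Rabs z < eps / (C4 + 1)) by (eapply Rlt_le_trans; [exact Hz| apply Rmin_r]).
    assert (HDG0 : DG 0 = aa) by (unfold DG; destruct (Req_EM_T 0 0); [reflexivity| lra]).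
    rewrite HDG0. eapply Rle_lt_trans. apply HD. lra.
    pose proof (Rabs_pos z).
    apply Rle_lt_trans with ((C4 + 1) * Rabs z). nra.
    apply Rmult_lt_reg_r with (/ (C4 + 1)). apply Rinv_0_lt_compat; lra.
    replace ((C4 + 1) * Rabs z * / (C4 + 1)) with (Rabs z) by (field; lra).
    replace (eps * / (C4 + 1)) with (eps / (C4 + 1)) by reflexivity. exact Hz2.
  - apply continuous_ext_loc with (g := fun z => (F z - G z) * / z).
    + generalize (locally_neq0 y H0). apply filter_imp. intros z Hz. unfold DG.
      destruct (Req_EM_T z 0). contradiction. reflexivity.
    + apply cont_Rmult. apply cont_Rminus. apply F_cont. apply HGc.
      apply cont_Rinv. apply continuous_id. exact H0.
Qed.

Definition DF y := pd_y phi y (/ G y) * 1 + pd_z phi y (/ G y) * (- DG y / G y ^ 2).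

Lemma F_deriv y : is_derive F y (DF y).
Proof.
  apply is_derive_Reals. unfold F, DF.
  apply (derivable_pt_lim_comp_2d phi (fun t => t) (fun t => / G t)).
  - apply phi_diff.
  - apply derivable_pt_lim_id.
  - apply is_derive_Reals. apply is_derive_inv. apply G_deriv. specialize (HGp y). lra.
Qed.

Lemma pd_comp_cont (f : R -> R -> R) y : (forall u v, continuity_2d_pt f u v) -> continuous (fun t => f t (/ G t)) y.
Proof.
  intros Hf. apply (cont2_comp f (fun t => t) (fun t => / G t)). apply Hf. apply continuous_id.
  apply cont_Rinv. apply HGc. specialize (HGp y). lra.
Qed.

Lemma DF_cont y : continuous DF y.
Proof.
  unfold DF. apply cont_Rplus.
  - apply cont_Rmult. apply pd_comp_cont. apply pdy_cont. apply continuous_const.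
  - apply cont_Rmult. apply pd_comp_cont. apply pdz_cont.
    apply cont_Rmult. apply cont_Ropp. apply DG_cont.
    apply cont_Rinv. apply (cont_Rmult G (fun t => G t ^ 1)). apply HGc.
    apply cont_Rmult. apply HGc. apply continuous_const.
    specialize (HGp y). simpl. nra.
Qed.


Lemma z_bound c1 y : 0 <= c1 -> Rabs (G y - 1) <= c1 * Rabs y -> c1 * Rabs y <= 1/2 ->
  Rabs (/ G y - 1) <= 2 * c1 * Rabs y /\ 1/2 <= G y <= 3/2.
Proof.
  intros Hc1 HG1 Hc1t.
  assert (HGb : 1/2 <= G y <= 3/2) by (apply Rabs_le_between in HG1; lra).
  split; [|exact HGb].
  replace (/ G y - 1) with ((1 - G y) / G y) by (field; lra).
  unfold Rdiv. rewrite Rabs_mult, Rabs_inv, (Rabs_right (G y)) by lra. rewrite Rabs_minus_sym.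
  apply Rmult_le_reg_r with (G y). lra. rewrite Rmult_assoc, Rinv_l by lra.
  assert (0 <= c1 * Rabs y) by (apply Rmult_le_pos; [lra| apply Rabs_pos]). nra.
Qed.

Lemma DF0 : DF 0 = AA - p0 * aa.
Proof.
  unfold DF. rewrite G0, Rinv_1.
  assert (HDG0 : DG 0 = aa) by (unfold DG; destruct (Req_EM_T 0 0); [reflexivity| lra]).
  rewrite HDG0. unfold AA, p0. field.
Qed.

Lemma DF_near : exists C3 d3, 0 < d3 <= 1 /\ 0 <= C3 /\ forall y, Rabs y <= d3 -> Rabs (DF y - DF 0) <= C3 * Rabs y.
Proof.
  destruct R3 as [c1 [C4 [d2 [Hd2 [Hc1 [HC4 [Hcd [HG1 [HD _]]]]]]]]].
  destruct (taylor0 (pd_y phi) 0 1 exdiff1_y) as [Dy [ry [Hry [HDy Hty]]]].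
  destruct (taylor0 (pd_z phi) 0 1 exdiff1_z) as [Dz [rz [Hrz [HDz Htz]]]].
  set (r := Rmin ry rz).
  assert (Hr : 0 < r) by (apply Rmin_pos; lra).
  set (d3 := Rmin d2 (r / (2 * (1 + 2 * c1)))).
  assert (Hd3 : 0 < d3 <= d2).
  { split. apply Rmin_pos. lra. apply Rdiv_lt_0_compat; lra. apply Rmin_l. }
  assert (Hd3r : (1 + 2 * c1) * d3 < r).
  { assert (d3 <= r / (2 * (1 + 2 * c1))) by apply Rmin_r.
    apply Rle_lt_trans with ((1 + 2 * c1) * (r / (2 * (1 + 2 * c1)))).
    apply Rmult_le_compat_l; lra. replace ((1 + 2 * c1) * (r / (2 * (1 + 2 * c1)))) with (r / 2) by (field; lra). lra. }
  assert (Hry' : r <= ry) by apply Rmin_l. assert (Hrz' : r <= rz) by apply Rmin_r.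
  pose proof p0_bd as Hp0.
  set (CQ := 4 * C4 + 10 * Rabs aa * c1).
  assert (HCQ : 0 <= CQ) by (unfold CQ; pose proof (Rabs_pos aa); assert (0 <= Rabs aa * c1) by (apply Rmult_le_pos; lra); lra).
  exists (Dy * (1 + 2 * c1) + Dz * (1 + 2 * c1) * (Rabs aa + CQ) + p0 * CQ), d3.
  split. lra. split.
  { pose proof (Rabs_pos aa). 
    assert (0 <= Dy * (1 + 2 * c1)) by (apply Rmult_le_pos; lra).
    assert (0 <= Dz * (1 + 2 * c1) * (Rabs aa + CQ)) by (apply Rmult_le_pos; [apply Rmult_le_pos|]; lra).
    assert (0 <= p0 * CQ) by (apply Rmult_le_pos; lra). lra. }
  intros y Hy.
  pose proof (Rabs_pos y) as Hy0.
  assert (Hyd2 : Rabs y <= d2) by lra.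
  assert (HGy := HG1 y Hyd2).
  assert (Hc1y : c1 * Rabs y <= 1/2) by (apply Rle_trans with (c1 * d2); [apply Rmult_le_compat_l; lra| exact Hcd]).
  destruct (z_bound c1 y Hc1 HGy Hc1y) as [Hz HGb].
  set (z := / G y) in *.
  assert (Hmax : Rmax (Rabs (y - 0)) (Rabs (z - 1)) <= (1 + 2 * c1) * Rabs y).
  { rewrite Rminus_0_r. apply Rmax_lub. nra. lra. }
  assert (Hyr : Rabs (y - 0) < r) by (rewrite Rminus_0_r; nra).
  assert (Hzr : Rabs (z - 1) < r) by nra.
  assert (Py := Hty y z ltac:(lra) ltac:(lra)).
  assert (Pz := Htz y z ltac:(lra) ltac:(lra)).
  assert (Py' : Rabs (pd_y phi y z - AA) <= Dy * (1 + 2 * c1) * Rabs y).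
  { eapply Rle_trans. exact Py. rewrite Rmult_assoc. apply Rmult_le_compat_l; lra. }
  assert (Pz' : Rabs (pd_z phi y z - p0) <= Dz * (1 + 2 * c1) * Rabs y).
  { eapply Rle_trans. exact Pz. rewrite Rmult_assoc. apply Rmult_le_compat_l; lra. }
  set (Q := DG y / G y ^ 2).
  assert (HGsq : 1/4 <= G y ^ 2) by (simpl; nra).
  assert (HiG : / G y ^ 2 <= 4) by (replace 4 with (/ (1/4)) by field; apply Rinv_le_contravar; lra).
  assert (HiG0 : 0 < / G y ^ 2) by (apply Rinv_0_lt_compat; lra).
  assert (HQ : Rabs (Q - aa) <= CQ * Rabs y).
  { unfold Q. replace (DG y / G y ^ 2 - aa) with ((DG y - aa) * / G y ^ 2 + aa * ((1 - G y) * (1 + G y)) * / G y ^ 2)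
      by (field; lra).
    eapply Rle_trans. apply Rabs_triang. rewrite !Rabs_mult, (Rabs_right (/ G y ^ 2)) by lra.
    rewrite (Rabs_right (1 + G y)) by lra. rewrite (Rabs_minus_sym 1 (G y)).
    assert (A1 : Rabs (DG y - aa) <= C4 * Rabs y) by (apply HD; lra).
    assert (A2 : Rabs (DG y - aa) * / G y ^ 2 <= C4 * Rabs y * 4).
    { apply Rmult_le_compat; try lra. apply Rabs_pos. }
    assert (A3 : Rabs (G y - 1) * (1 + G y) <= c1 * Rabs y * (5/2)).
    { apply Rmult_le_compat; try lra. apply Rabs_pos. }
    assert (A4 : Rabs aa * (Rabs (G y - 1) * (1 + G y)) * / G y ^ 2 <= Rabs aa * (c1 * Rabs y * (5/2)) * 4).
    { pose proof (Rabs_pos aa). apply Rmult_le_compat; try lra.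
      apply Rmult_le_pos. lra. apply Rmult_le_pos. apply Rabs_pos. lra.
      apply Rmult_le_compat_l; lra. }
    unfold CQ. lra. }
  assert (HQb : Rabs Q <= Rabs aa + CQ).
  { replace Q with ((Q - aa) + aa) by ring. eapply Rle_trans. apply Rabs_triang.
    assert (CQ * Rabs y <= CQ) by (rewrite <- (Rmult_1_r CQ) at 2; apply Rmult_le_compat_l; lra). lra. }
  rewrite DF0. unfold DF. fold z.
  replace (pd_y phi y z * 1 + pd_z phi y z * (- DG y / G y ^ 2) - (AA - p0 * aa))
    with ((pd_y phi y z - AA) - (pd_z phi y z - p0) * Q - p0 * (Q - aa)) by (unfold Q; field; lra).
  eapply Rle_trans. apply Rabs_triang. rewrite Rabs_Ropp, Rabs_mult, (Rabs_right p0) by lra.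
  eapply Rle_trans. apply Rplus_le_compat_r. apply Rabs_triang. rewrite Rabs_Ropp, Rabs_mult.
  assert (B1 : Rabs (pd_z phi y z - p0) * Rabs Q <= Dz * (1 + 2 * c1) * Rabs y * (Rabs aa + CQ)).
  { apply Rmult_le_compat; try apply Rabs_pos; lra. }
  assert (B2 : p0 * Rabs (Q - aa) <= p0 * (CQ * Rabs y)) by (apply Rmult_le_compat_l; lra).
  replace ((Dy * (1 + 2 * c1) + Dz * (1 + 2 * c1) * (Rabs aa + CQ) + p0 * CQ) * Rabs y)
    with (Dy * (1 + 2 * c1) * Rabs y + Dz * (1 + 2 * c1) * Rabs y * (Rabs aa + CQ) + p0 * (CQ * Rabs y)) by ring.
  lra.
Qed.


Lemma minmax_abs c y : Rmin 0 y <= c <= Rmax 0 y -> Rabs c <= Rabs y.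
Proof.
  intros H. unfold Rmin, Rmax in H. destruct Rle_dec.
  - rewrite (Rabs_right y) by lra. rewrite Rabs_right by lra. lra.
  - rewrite (Rabs_left y) by lra. destruct (Rle_or_lt 0 c). rewrite Rabs_right by lra. lra.
    rewrite Rabs_left by lra. lra.
Qed.

Lemma F_contpt x : continuity_pt F x.
Proof. apply continuity_pt_filterlim. apply F_cont. Qed.

Lemma Eall : exists C d3, 0 < d3 /\ 0 <= C /\
  (forall y, Rabs y < d3 -> Rabs (DF y - DF 0) <= C * Rabs y ^ 1) /\
  (forall y, Rabs y < d3 -> Rabs (F y - (F 0 + DF 0 * y)) <= C * Rabs y ^ 2) /\
  (forall y, Rabs y < d3 -> Rabs (gg y - (F 0 * y + DF 0 * y ^ 2 / 2)) <= C * Rabs y ^ 3).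
Proof.
  destruct DF_near as [C3 [d3 [Hd3 [HC3 H3]]]].
  assert (E3 : forall y, Rabs y < d3 -> Rabs (DF y - DF 0) <= C3 * Rabs y ^ 1).
  { intros y Hy. rewrite pow_1. apply H3. lra. }
  assert (E2 : forall y, Rabs y < d3 -> Rabs (F y - (F 0 + DF 0 * y)) <= C3 * Rabs y ^ 2).
  { intros y Hy. destruct (MVT_gen F 0 y DF) as [c [Hc Heq]].
    - intros x _. apply F_deriv.
    - intros x _. apply F_contpt.
    - assert (Hcy := minmax_abs c y Hc).
      replace (F y - (F 0 + DF 0 * y)) with ((DF c - DF 0) * y) by (rewrite Rminus_0_r in Heq; lra).
      rewrite Rabs_mult. 
      assert (A := H3 c ltac:(lra)). pose proof (Rabs_pos y). pose proof (Rabs_pos c).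
      simpl. rewrite Rmult_1_r.
      apply Rle_trans with (C3 * Rabs c * Rabs y). apply Rmult_le_compat_r; lra.
      rewrite Rmult_assoc. apply Rmult_le_compat_l. lra. apply Rmult_le_compat_r; lra. }
  exists C3, d3. split; [lra|]. split; [exact HC3|]. split; [exact E3|]. split; [exact E2|].
  intros y Hy.
  set (h := fun x => gg x - (F 0 * x + DF 0 * x ^ 2 / 2)).
  assert (Hh : forall x, is_derive h x (F x - (F 0 + DF 0 * x))).
  { intros x. unfold h. apply (is_derive_minus gg (fun x => F 0 * x + DF 0 * x ^ 2 / 2)).
    apply gg_deriv. auto_derive. auto. toR. field. }
  destruct (MVT_gen h 0 y (fun x => F x - (F 0 + DF 0 * x))) as [c [Hc Heq]].
  - intros x _. apply Hh.
  - intros x _. apply continuity_pt_filterlim. eapply derive_cont. apply Hh.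
  - assert (Hcy := minmax_abs c y Hc).
    assert (Hh0 : h 0 = 0). { unfold h, gg. toR. simpl. lra. }
    change (Rabs (h y) <= C3 * Rabs y ^ 3).
    replace (h y) with ((F c - (F 0 + DF 0 * c)) * y) by (rewrite Hh0, Rminus_0_r in Heq; lra).
    rewrite Rabs_mult. assert (A := E2 c ltac:(lra)).
    pose proof (Rabs_pos y). pose proof (Rabs_pos c).
    assert (Rabs c ^ 2 <= Rabs y ^ 2) by (apply pow_incr; lra).
    apply Rle_trans with (C3 * Rabs c ^ 2 * Rabs y). apply Rmult_le_compat_r; lra.
    replace (C3 * Rabs y ^ 3) with (C3 * Rabs y ^ 2 * Rabs y) by ring.
    apply Rmult_le_compat_r. lra. apply Rmult_le_compat_l; lra.
Qed.


Lemma HD1 : Derive gg = F.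
Proof. apply functional_extensionality. intros y. apply is_derive_unique. apply gg_deriv. Qed.

Lemma HD2 : Derive_n gg 2 = DF.
Proof.
  apply functional_extensionality. intros y. simpl.
  rewrite (Derive_ext (fun x => Derive (fun x0 => gg x0) x) F).
  apply is_derive_unique. apply F_deriv.
  intros t. apply is_derive_unique. apply gg_deriv.
Qed.

Lemma F0 : F 0 = 1.
Proof. unfold F. rewrite G0, Rinv_1. exact H01. Qed.

Lemma reg_main : is_solution phi gg /\ C2_1d gg /\
    bigO0 (fun y => gg y - (Derive gg 0 * y + Derive_n gg 2 0 * y ^ 2 / 2)) 3 /\
    bigO0 (fun y => Derive gg y - (Derive gg 0 + Derive_n gg 2 0 * y)) 2 /\
    bigO0 (fun y => Derive_n gg 2 y - Derive_n gg 2 0) 1 /\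
    (forall y, y <> 0 -> 0 < gg y / y).
Proof.
  rewrite HD2, HD1.
  destruct Eall as [C [d3 [Hd3 [HC [E3 [E2 E1]]]]]].
  split; [|split; [|split; [|split; [|split]]]].
  - split; [|split; [|split; [|split]]].
    + intros y. exists (F y). apply gg_deriv.
    + unfold gg. ring.
    + intros y Hy. pose proof (HGp y) as Hgy.
      assert (Hg : gg y <> 0) by (unfold gg; apply Rmult_integral_contrapositive; split; lra).
      assert (E : y / gg y = / G y) by (unfold gg; field; split; lra).
      split; [exact Hg|]. rewrite E. split. apply Rlt_le, Rinv_0_lt_compat; lra.
      rewrite HD1. reflexivity.
    + rewrite HD1, F0. lra.
    + rewrite HD1, F0, Rinv_1. symmetry. exact H01.
  - intros y. split; [|split].
    + exists (F y). apply gg_deriv.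
    + rewrite HD1. exists (DF y). apply F_deriv.
    + rewrite HD2. apply DF_cont.
  - exists C, d3. split; [exact Hd3|]. exact E1.
  - exists C, d3. split; [exact Hd3|]. exact E2.
  - exists C, d3. split; [exact Hd3|]. exact E3.
  - intros y Hy. unfold gg. replace (y * G y / y) with (G y) by (field; exact Hy). apply HGp.
Qed.

End Reg.

Lemma uniq_h (G : R -> R) (HGu : forall v, Gsol v -> forall y, v y = G y) (h : R -> R) :
  is_solution phi h -> forall y, h y = y * G y.
Proof.
  intros [Hex [H0 [Hnz [Hd0 Hd0eq]]]].
  set (d := Derive h 0) in *.
  set (v := fun y => if Req_EM_T y 0 then d else h y / y).
  assert (Hv0 : v 0 = d) by (unfold v; destruct (Req_EM_T 0 0); [reflexivity| lra]).
  assert (Hvnz : forall y, y <> 0 -> v y = h y / y) by (intros y Hy; unfold v; destruct (Req_EM_T y 0); [contradiction| reflexivity]).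
  assert (Hdl : derivable_pt_lim h 0 d) by (apply is_derive_Reals; apply Derive_correct; apply Hex).
  assert (Hvc0 : forall eps, 0 < eps -> exists delta : posreal, forall x, x <> 0 -> Rabs x < delta -> Rabs (v x - d) < eps).
  { intros eps Heps. destruct (Hdl eps Heps) as [delta Hdelta]. exists delta. intros x Hx Hxd.
    rewrite Hvnz by exact Hx. specialize (Hdelta x Hx Hxd). rewrite Rplus_0_l, H0, Rminus_0_r in Hdelta. exact Hdelta. }
  assert (Hvpos : forall y, y <> 0 -> 0 < v y).
  { intros y Hy. rewrite Hvnz by exact Hy. destruct (Hnz y Hy) as [Hhy [Hq _]].
    assert (Hq' : 0 < y / h y).
    { destruct Hq as [Hq|Hq]; auto. exfalso. symmetry in Hq. unfold Rdiv in Hq.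
      apply Rmult_integral in Hq. destruct Hq as [Hq|Hq]. contradiction. apply Rinv_neq_0_compat in Hhy. contradiction. }
    replace (h y / y) with (/ (y / h y)) by (field; split; auto). apply Rinv_0_lt_compat. exact Hq'. }
  assert (Hdpos : 0 < d).
  { destruct (Rle_or_lt d 0) as [Hle|Hlt]; auto. exfalso.
    assert (Hle' : d < 0) by (destruct Hle; auto; contradiction).
    destruct (Hvc0 (- d) ltac:(lra)) as [delta Hdelta].
    assert (Hx : delta / 2 <> 0) by (generalize (cond_pos delta); lra).
    assert (Hxd : Rabs (delta / 2) < delta) by (rewrite Rabs_right; generalize (cond_pos delta); lra).
    specialize (Hdelta _ Hx Hxd). specialize (Hvpos _ Hx). apply Rabs_lt_between in Hdelta. lra. }
  assert (Hd1 : d = 1) by (apply at0; auto).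
  assert (Hvp : forall t, 0 < v t) by (intros t; destruct (Req_EM_T t 0); [subst; rewrite Hv0; lra| auto]).
  assert (Hvc : forall t, continuous v t).
  { intros t. destruct (Req_EM_T t 0) as [Ht|Ht].
    - subst. apply ed_cont. intros eps. destruct (Hvc0 eps (cond_pos eps)) as [delta Hdelta].
      exists delta. intros x Hx. rewrite Rminus_0_r in Hx. rewrite Hv0.
      destruct (Req_EM_T x 0). subst. rewrite Hv0. replace (d - d) with 0 by ring. rewrite Rabs_R0. apply cond_pos.
      apply Hdelta; auto.
    - apply continuous_ext_loc with (g := fun z => h z * / z).
      + generalize (locally_neq0 t Ht). apply filter_imp. intros z Hz. rewrite Hvnz by exact Hz. reflexivity.
      + apply cont_Rmult. apply (ex_derive_continuous (K := R_AbsRing) (V := R_NormedModule)). apply Hex.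
        apply cont_Rinv. apply continuous_id. exact Ht. }
  set (f := fun t => phi t (/ v t)).
  assert (Hfc : forall t, continuous f t) by (apply true_integrand_cont; auto).
  assert (HDh : forall t, Derive h t = f t).
  { intros t. unfold f. destruct (Req_EM_T t 0) as [Ht|Ht].
    - subst. fold d. rewrite Hv0, Hd1, Rinv_1, H01. reflexivity.
    - destruct (Hnz t Ht) as [Hht [_ Heq]]. rewrite Heq. rewrite Hvnz by exact Ht. f_equal. field. split; auto. }
  assert (Hint : forall y, h y = RInt f 0 y).
  { intros y. rewrite <- (RInt_ext (Derive h)). rewrite RInt_Derive. rewrite H0. ring.
    intros; apply Hex. intros x _. apply continuous_ext_loc with (g := f). apply filter_forall. intros; symmetry; apply HDh. apply Hfc.
    intros x _. apply HDh. }
  assert (Hvs : Gsol v).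
  { split; [exact Hvc|]. split; [exact Hvp|].
    intros y. destruct (Req_EM_T y 0) as [Hy|Hy].
    - subst. rewrite avg_0. fold f. unfold f. rewrite Hv0, Hd1, Rinv_1, H01. reflexivity.
    - fold f. apply Rmult_eq_reg_l with y; auto. rewrite avg_rint by exact Hfc. rewrite <- Hint.
      rewrite Hvnz by exact Hy. field. exact Hy. }
  intros y. destruct (Req_EM_T y 0) as [Hy|Hy].
  - subst. rewrite H0. ring.
  - rewrite <- (HGu v Hvs y). rewrite Hvnz by exact Hy. field. exact Hy.
Qed.

Lemma main_sec : exists g : R -> R,
    is_solution phi g /\
    (forall h, is_solution phi h -> forall y, h y = g y) /\
    C2_1d g /\
    bigO0 (fun y => g y - (Derive g 0 * y + Derive_n g 2 0 * y ^ 2 / 2)) 3 /\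
    bigO0 (fun y => Derive g y - (Derive g 0 + Derive_n g 2 0 * y)) 2 /\
    bigO0 (fun y => Derive_n g 2 y - Derive_n g 2 0) 1 /\
    (forall y, y <> 0 -> 0 < g y / y).
Proof.
  destruct G_exists_unique as [G [[HGc [HGp HGe]] HGu]].
  destruct (reg_main G HGc HGp HGe) as [A1 [A2 [A3 [A4 [A5 A6]]]]].
  exists (gg G). split; [exact A1|]. split.
  - intros h Hh y. rewrite (uniq_h G HGu h Hh y). reflexivity.
  - auto.
Qed.

End Main.

Theorem lemmaA3 (phi : R -> R -> R)
  (Hc2 : C2_2d phi)
  (Hpos : forall y z, 0 <= z -> 0 < phi y z)
  (Hinf : forall y z, 0 <= z -> 0 <= pd_z phi y z)
  (Hsup : exists M, forall y z, 0 <= z -> pd_z phi y z <= M)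
  (Hd01 : pd_z phi 0 1 < 1)
  (H01 : phi 0 1 = 1)
  (Huniq : forall a, 0 < a -> a = phi 0 (/ phi 0 (/ a)) -> a = 1) :
  exists g : R -> R,
    is_solution phi g /\
    (forall h, is_solution phi h -> forall y, h y = g y) /\
    C2_1d g /\
    bigO0 (fun y => g y - (Derive g 0 * y + Derive_n g 2 0 * y ^ 2 / 2)) 3 /\
    bigO0 (fun y => Derive g y - (Derive g 0 + Derive_n g 2 0 * y)) 2 /\
    bigO0 (fun y => Derive_n g 2 y - Derive_n g 2 0) 1 /\
    (forall y, y <> 0 -> 0 < g y / y).
  intros. destruct Hsup as [M HM].
  eapply main_sec; eassumption.
Qed.
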